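(* Let $1\le p<\infty$, $N\ge2$, and for $1\le i\le N$ let $T_i=T_{f_i,\omega^{(i)}}$ be unilateral pseudo-shifts on $\ell^p(\mathbb{N})$ with maps $f_i$ and weights $\omega^{(i)}=(w^{(i)}_{f_i(m)})_m$; let $W^{(i)}_{m,n}=\prod_{\nu=1}^nw^{(i)}_{f_i^\nu(m)}$. The following are equivalent: (i) $T_1,\dots,T_N$ are s-hypercyclic. (ii) $T_1,\dots,T_N$ satisfy the Simultaneous Blow-up/Collapse Criterion. (iii) There is a strictly increasing sequence $(n_k)$ of positive integers such that (a) $|W^{(i)}_{m,n_k}|\to\infty$ as $k\to\infty$ for all $m\in\mathbb{N}$, $1\le i\le N$; and (b) for each $\epsilon>0$, $K,M\in\mathbb{N}$ and nonzero scalars $a_1,\dots,a_M$, there is $k\ge K$ such that for all $1\le i,\ell\le N$ with $i\neq\ell$: $\left|\frac{W^{(i)}_{f_i^{-n_k}(j),n_k}}{W^{(\ell)}_{f_\ell^{-n_k}(j),n_k}}\right|<\epsilon$ whenever $j\in f_\ell^{n_k}([M])\cap f_i^{n_k}(\mathbb{N}\setminus[M])$, and $\left|\frac{W^{(i)}_{f_i^{-n_k}(j),n_k}}{W^{(\ell)}_{f_\ell^{-n_k}(j),n_k}}-\frac{a_{f_i^{-n_k}(j)}}{a_{f_\ell^{-n_k}(j)}}\right|<\epsilon$ whenever $j\in f_\ell^{n_k}([M])\cap f_i^{n_k}([M])$.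
   Context: $\mathbb{N}=\{1,2,\dots\}$; $\{e_m\}$ is the canonical basis of $\ell^p(\mathbb{N})$ over $\mathbb{K}\in\{\mathbb{R},\mathbb{C}\}$. For a strictly increasing $f:\mathbb{N}\to\mathbb{N}$ with $f(1)>1$ and a bounded, nonzero sequence of scalars $\omega=(w_{f(m)})_m$, $T_{f,\omega}(\sum_m\alpha_me_m)=\sum_mw_{f(m)}\alpha_{f(m)}e_m$. $[M]=\{1,\dots,M\}$, $f^n$ the $n$-fold composition, $f(A)=\{f(m):m\in A\}$, $f^{-n}$ the inverse of $f^n$ on $f^n(\mathbb{N})$. Operators $T_1,\dots,T_N$ on $X$ are s-hypercyclic if some $x\in X$ has the closure of $\{(T_1^nx,\dots,T_N^nx):n\in\mathbb{N}\}$ containing the diagonal $\{(y,\dots,y):y\in X\}$ of $\oplus_{i=1}^NX$. They satisfy the Simultaneous Blow-up/Collapse Criterion if there exist an increasing sequence $(n_k)$, a dense $X_0\subset X$ and maps $S_k:X_0\to X$ with $T_i^{n_k}x\to0$ for all $x\in X_0$, $1\le i\le N$, and such that for each $\epsilon>0$, $K\in\mathbb{N}$, $x_0\in X_0$ there is $k\ge K$ with $\|S_k(x_0)\|<\epsilon$ and $\|T_i^{n_k}S_k(x_0)-x_0\|<\epsilon$ for all $i$. *)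

(* Defs.v *)
From Stdlib Require Import Reals.
From Coquelicot Require Import Coquelicot.
Open Scope R_scope.

Record scalars := Scalars {
  sc :> Type;
  s0 : sc; s1 : sc;
  sadd : sc -> sc -> sc;
  sopp : sc -> sc;
  smul : sc -> sc -> sc;
  sinv : sc -> sc;
  sabs : sc -> R }.

Definition RScal : scalars :=
  Scalars R 0 1 Rplus Ropp Rmult Rinv Rabs.
Definition CScal : scalars :=
  Scalars C (RtoC 0) (RtoC 1) Cplus Copp Cmult Cinv Cmod.

Section Defs.
Variable K : scalars.

Definition ssub (x y : K) : K := sadd K x (sopp K y).
Definition sdiv (x y : K) : K := smul K x (sinv K y).

(* sequences indexed by N = {1,2,...}; the entry at index 0 is unused and
   required to be 0 for elements of l^p *)
Definition seqK := nat -> K.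

Definition rpow (a p : R) : R :=
  if Req_EM_T a 0 then 0 else Rpower a p.

Definition in_lp (p : R) (x : seqK) : Prop :=
  x 0%nat = s0 K /\ ex_series (fun m => rpow (sabs K (x m)) p).

Definition lpnorm (p : R) (x : seqK) : R :=
  rpow (Series (fun m => rpow (sabs K (x m)) p)) (/ p).

Definition lpdist (p : R) (x y : seqK) : R :=
  lpnorm p (fun m => ssub (x m) (y m)).

Definition pshift (f : nat -> nat) (w : nat -> K) (x : seqK) : seqK :=
  fun m => match m with
           | O => s0 K
           | S _ => smul K (w (f m)) (x (f m))
           end.

Definition pshift_iter (n : nat) (f : nat -> nat) (w : nat -> K) (x : seqK)
  : seqK := Nat.iter n (pshift f w) x.

Definition admissible_map (f : nat -> nat) : Prop :=
  (1 < f 1%nat)%nat /\ forall m, (1 <= m)%nat -> (f m < f (S m))%nat.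

Definition admissible_weight (f : nat -> nat) (w : nat -> K) : Prop :=
  (exists B, forall m, (1 <= m)%nat -> sabs K (w (f m)) <= B) /\
  (exists m, (1 <= m)%nat /\ w (f m) <> s0 K).

Fixpoint Wprod (f : nat -> nat) (w : nat -> K) (m n : nat) : K :=
  match n with
  | O => s1 K
  | S n' => smul K (Wprod f w m n') (w (Nat.iter (S n') f m))
  end.

(* s-hypercyclicity of T_0,...,T_{N-1} (indices 0..N-1 stand for 1..N):
   some x in l^p has orbit closure (product topology on the N-fold direct sum)
   containing the diagonal *)
Definition s_hypercyclic (p : R) (N : nat) (f : nat -> nat -> nat)
  (w : nat -> nat -> K) : Prop :=
  exists x, in_lp p x /\
    forall y, in_lp p y -> forall eps, 0 < eps ->
      exists n, (1 <= n)%nat /\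
        forall i, (i < N)%nat -> lpdist p (pshift_iter n (f i) (w i) x) y < eps.

Definition SBCC (p : R) (N : nat) (f : nat -> nat -> nat)
  (w : nat -> nat -> K) : Prop :=
  exists (nk : nat -> nat) (X0 : seqK -> Prop) (Sk : nat -> seqK -> seqK),
    (1 <= nk 0%nat)%nat /\ (forall k, (nk k < nk (S k))%nat) /\
    (forall x, X0 x -> in_lp p x) /\
    (forall y, in_lp p y -> forall eps, 0 < eps ->
        exists x, X0 x /\ lpdist p x y < eps) /\
    (forall k x, X0 x -> in_lp p (Sk k x)) /\
    (forall x, X0 x -> forall i, (i < N)%nat ->
        forall eps, 0 < eps -> exists K0, forall k, (K0 <= k)%nat ->
          lpnorm p (pshift_iter (nk k) (f i) (w i) x) < eps) /\
    (forall eps, 0 < eps -> forall K0 x0, X0 x0 ->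
        exists k, (K0 <= k)%nat /\ lpnorm p (Sk k x0) < eps /\
          forall i, (i < N)%nat ->
            lpdist p (pshift_iter (nk k) (f i) (w i) (Sk k x0)) x0 < eps).

(* condition (iii); for j = f_l^{n}(m) = f_i^{n}(m') we have
   f_l^{-n}(j) = m and f_i^{-n}(j) = m' *)
Definition weight_condition (N : nat) (f : nat -> nat -> nat)
  (w : nat -> nat -> K) : Prop :=
  exists nk : nat -> nat,
    (1 <= nk 0%nat)%nat /\ (forall k, (nk k < nk (S k))%nat) /\
    (forall m i, (1 <= m)%nat -> (i < N)%nat ->
       forall B, exists K0, forall k, (K0 <= k)%nat ->
         B < sabs K (Wprod (f i) (w i) m (nk k))) /\
    (forall eps, 0 < eps -> forall (K0 M : nat) (a : nat -> K),
       (forall j, (1 <= j <= M)%nat -> a j <> s0 K) ->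
       exists k, (K0 <= k)%nat /\
         forall i l, (i < N)%nat -> (l < N)%nat -> i <> l ->
           (forall m m', (1 <= m <= M)%nat -> (M < m')%nat ->
              Nat.iter (nk k) (f l) m = Nat.iter (nk k) (f i) m' ->
              sabs K (sdiv (Wprod (f i) (w i) m' (nk k))
                           (Wprod (f l) (w l) m (nk k))) < eps) /\
           (forall m m', (1 <= m <= M)%nat -> (1 <= m' <= M)%nat ->
              Nat.iter (nk k) (f l) m = Nat.iter (nk k) (f i) m' ->
              sabs K (ssub (sdiv (Wprod (f i) (w i) m' (nk k))
                                 (Wprod (f l) (w l) m (nk k)))
                           (sdiv (a m') (a m))) < eps)).

End Defs.

(* Main.v *)
Require Import Defs.
From Stdlib Require Import Reals Lra Lia ZArith List Classical ClassicalEpsilon Cantor.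
From Coquelicot Require Import Coquelicot.
Open Scope R_scope.

Section KFacts.
Variable K : scalars.
Hypothesis HK : K = RScal \/ K = CScal.

Lemma sabs_ge0 (x : K) : 0 <= sabs K x.
Proof. destruct HK; subst; simpl. apply Rabs_pos. apply Cmod_ge_0. Qed.

Lemma sabs_mul (x y : K) : sabs K (smul K x y) = sabs K x * sabs K y.
Proof. destruct HK; subst; simpl. apply Rabs_mult. apply Cmod_mult. Qed.

Lemma sabs_inv (x : K) : sabs K (sinv K x) = / sabs K x.
Proof. destruct HK; subst; simpl. apply Rabs_inv.
  destruct (Ceq_dec x 0). subst. replace (Cinv 0) with (RtoC 0).
  rewrite Cmod_0, Rinv_0; auto.
  unfold Cinv, RtoC; simpl; f_equal; unfold Rdiv; ring.
  apply Cmod_inv; auto. Qed.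

Lemma sabs_0 : sabs K (s0 K) = 0.
Proof. destruct HK; subst; simpl. apply Rabs_R0. apply Cmod_0. Qed.

Lemma sabs_1 : sabs K (s1 K) = 1.
Proof. destruct HK; subst; simpl. apply Rabs_R1. apply Cmod_1. Qed.

Lemma sabs_eq0 (x : K) : sabs K x = 0 -> x = s0 K.
Proof. destruct HK; subst; simpl. intros; apply Rabs_eq_0; auto. apply Cmod_eq_0. Qed.

Lemma sabs_pos (x : K) : x <> s0 K -> 0 < sabs K x.
Proof. intro H. destruct (sabs_ge0 x); auto. exfalso; apply H, sabs_eq0; auto. Qed.

Lemma sabs_add (x y : K) : sabs K (sadd K x y) <= sabs K x + sabs K y.
Proof. destruct HK; subst; simpl. apply Rabs_triang. apply Cmod_triangle. Qed.

Lemma sabs_opp (x : K) : sabs K (sopp K x) = sabs K x.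
Proof. destruct HK; subst; simpl. apply Rabs_Ropp. apply Cmod_opp. Qed.

Lemma sabs_sub (x y : K) : sabs K (ssub K x y) <= sabs K x + sabs K y.
Proof. unfold ssub. rewrite <- (sabs_opp y). apply sabs_add. Qed.

Lemma ssub_sym (x y : K) : sabs K (ssub K x y) = sabs K (ssub K y x).
Proof. unfold ssub. destruct HK; subst; simpl.
  rewrite <- Rabs_Ropp. f_equal; ring.
  rewrite <- Cmod_opp. f_equal; ring. Qed.

Lemma ssub_tri (x y z : K) : sabs K (ssub K x z) <= sabs K (ssub K x y) + sabs K (ssub K y z).
Proof. unfold ssub. replace (sadd K x (sopp K z)) with
   (sadd K (sadd K x (sopp K y)) (sadd K y (sopp K z))). apply sabs_add.
  destruct HK; subst; simpl; ring. Qed.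

Lemma ssub_rev_tri (x y : K) : sabs K x - sabs K y <= sabs K (ssub K x y).
Proof.
  assert (H := ssub_tri x y (s0 K)).
  assert (E : forall u : K, ssub K u (s0 K) = u) by
    (intro u; unfold ssub; destruct HK; subst; simpl; ring).
  rewrite !E in H. lra. Qed.

Lemma ssub_0r (x : K) : ssub K x (s0 K) = x.
Proof. unfold ssub; destruct HK; subst; simpl; ring. Qed.

Lemma ssub_0l (x : K) : sabs K (ssub K (s0 K) x) = sabs K x.
Proof. rewrite ssub_sym. now rewrite ssub_0r. Qed.

Lemma ssub_diag (x : K) : ssub K x x = s0 K.
Proof. unfold ssub; destruct HK; subst; simpl; ring. Qed.

Lemma smul_comm (x y : K) : smul K x y = smul K y x.
Proof. destruct HK; subst; simpl; ring. Qed.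

Lemma smul_assoc (x y z : K) : smul K (smul K x y) z = smul K x (smul K y z).
Proof. destruct HK; subst; simpl; ring. Qed.

Lemma smul_1l (x : K) : smul K (s1 K) x = x.
Proof. destruct HK; subst; simpl; ring. Qed.

Lemma smul_0l (x : K) : smul K (s0 K) x = s0 K.
Proof. destruct HK; subst; simpl; ring. Qed.

Lemma smul_0r (x : K) : smul K x (s0 K) = s0 K.
Proof. destruct HK; subst; simpl; ring. Qed.

Lemma sadd_0l (x : K) : sadd K (s0 K) x = x.
Proof. destruct HK; subst; simpl; ring. Qed.

Lemma sadd_0r (x : K) : sadd K x (s0 K) = x.
Proof. destruct HK; subst; simpl; ring. Qed.

Lemma smul_sub_distr (x y z : K) :
  smul K x (ssub K y z) = ssub K (smul K x y) (smul K x z).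
Proof. unfold ssub; destruct HK; subst; simpl; ring. Qed.

Lemma ssub_add (x y z : K) : ssub K (sadd K x y) z = sadd K (ssub K x z) y.
Proof. unfold ssub; destruct HK; subst; simpl; ring. Qed.

Lemma sabs_div (x y : K) : sabs K (sdiv K x y) = sabs K x / sabs K y.
Proof. unfold sdiv. rewrite sabs_mul, sabs_inv. reflexivity. Qed.

Lemma sdiv_mul_cancel (x y : K) : y <> s0 K -> smul K y (sdiv K x y) = x.
Proof. unfold sdiv; destruct HK; subst; simpl; intros. field; auto.
  field; auto. Qed.

Lemma sdiv_simpl (a b u : K) : u <> s0 K -> b <> s0 K ->
  sdiv K (smul K a u) (smul K b u) = sdiv K a b.
Proof. unfold sdiv; destruct HK; subst; simpl; intros. field; auto.
  field; auto. Qed.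

Lemma sdiv_diag (a : K) : a <> s0 K -> sdiv K a a = s1 K.
Proof. unfold sdiv; destruct HK; subst; simpl; intros. field; auto.
  field; auto. Qed.

Lemma sdiv_diff (A B al be : K) : A <> s0 K -> al <> s0 K ->
  ssub K (sdiv K B A) (sdiv K be al) =
  sdiv K (ssub K (smul K (ssub K B be) al) (smul K be (ssub K A al))) (smul K A al).
Proof. unfold sdiv, ssub; destruct HK; subst; simpl; intros. field; auto.
  field; auto. Qed.

Lemma smul_neq0 (x y : K) : x <> s0 K -> y <> s0 K -> smul K x y <> s0 K.
Proof. intros Hx Hy E. assert (H := f_equal (sabs K) E). rewrite sabs_mul, sabs_0 in H.
  apply sabs_pos in Hx; apply sabs_pos in Hy. nra. Qed.

Lemma sadd_assoc (x y z : K) : sadd K (sadd K x y) z = sadd K x (sadd K y z).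
Proof. destruct HK; subst; simpl; ring. Qed.

Lemma sadd_comm (x y : K) : sadd K x y = sadd K y x.
Proof. destruct HK; subst; simpl; ring. Qed.

Lemma smul_sdiv_swap (W' zm W : K) : smul K W' (sdiv K zm W) = smul K (sdiv K W' W) zm.
Proof. unfold sdiv; destruct HK; subst; simpl; ring. Qed.

Lemma ssub_factor (r zm zm' : K) : zm <> s0 K ->
  ssub K (smul K r zm) zm' = smul K (ssub K r (sdiv K zm' zm)) zm.
Proof. unfold sdiv, ssub; destruct HK; subst; simpl; intros. field; auto. field; auto. Qed.

Lemma smul_add_distr (x y z : K) : smul K x (sadd K y z) = sadd K (smul K x y) (smul K x z).
Proof. destruct HK; subst; simpl; ring. Qed.

Lemma ssub_sadd_l (a b : K) : ssub K (sadd K a b) a = b.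
Proof. unfold ssub; destruct HK; subst; simpl; ring. Qed.

End KFacts.

Lemma Series_zero : Series (fun _ => 0) = 0.
Proof. rewrite (Series_ext _ (fun n => 0 * 0)) by (intros; ring).
  rewrite Series_scal_l; ring. Qed.

Lemma ex_series_zero : ex_series (fun _ : nat => 0).
Proof. exists 0. apply is_series_Reals. intros e He. exists 0%nat. intros n _.
  rewrite sum_cte. unfold Rdist. rewrite Rmult_0_l, Rminus_0_r, Rabs_R0. auto. Qed.

Lemma sum_f_R0_nonneg (a : nat -> R) n : (forall k, 0 <= a k) -> 0 <= sum_f_R0 a n.
Proof. intros H; induction n; simpl; auto. specialize (H (S n)); lra. Qed.

Lemma sum_f_R0_term (a : nat -> R) n k : (forall k, 0 <= a k) -> (k <= n)%nat ->
  a k <= sum_f_R0 a n.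
Proof. intros H Hk. induction n. inversion Hk; subst; simpl; lra.
  inversion Hk; subst. simpl. assert (0 <= sum_f_R0 a n) by (apply sum_f_R0_nonneg; auto). lra.
  simpl. specialize (IHn H1). specialize (H (S n)). lra. Qed.

Lemma sum_f_R0_le (a b : nat -> R) n : (forall k, (k <= n)%nat -> a k <= b k) ->
  sum_f_R0 a n <= sum_f_R0 b n.
Proof. intros H. induction n; simpl. apply H; lia.
  assert (a (S n) <= b (S n)) by (apply H; lia).
  assert (sum_f_R0 a n <= sum_f_R0 b n) by (apply IHn; intros; apply H; lia). lra. Qed.

Lemma sum_f_R0_mono (a : nat -> R) n m : (forall k, 0 <= a k) -> (n <= m)%nat ->
  sum_f_R0 a n <= sum_f_R0 a m.
Proof. intros H Hnm. induction Hnm. lra. simpl. specialize (H (S m)). lra. Qed.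

Lemma nonneg_bounded_series (a : nat -> R) (b : R) :
  (forall n, 0 <= a n) -> (forall n, sum_f_R0 a n <= b) ->
  ex_series a /\ Series a <= b.
Proof.
  intros H0 Hb.
  destruct (growing_cv (sum_f_R0 a)) as [l Hl].
  - intro n. simpl. specialize (H0 (S n)). lra.
  - exists b. intros x [n ->]. apply Hb.
  - assert (Hs : is_series a l) by (apply is_series_Reals; exact Hl).
    split. exists l; exact Hs.
    rewrite (is_series_unique _ _ Hs).
    destruct (Rle_dec l b) as [|Hn]; auto.
    destruct (Hl (l - b)) as [N HN]. lra.
    specialize (HN N (le_n _)). specialize (Hb N). unfold Rdist in HN.
    apply Rabs_def2 in HN. lra. Qed.

Lemma partial_le_series (a : nat -> R) n : (forall k, 0 <= a k) -> ex_series a ->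
  sum_f_R0 a n <= Series a.
Proof.
  intros H0 Hex. rewrite (Series_incr_n a (S n)) by (lia || auto). simpl pred.
  assert (0 <= Series (fun k => a (S n + k)%nat)).
  { rewrite <- Series_zero. apply Series_le. intros; split; [lra|apply H0].
    apply (ex_series_incr_n a (S n)); auto. }
  lra. Qed.

Lemma term_le_series (a : nat -> R) n : (forall k, 0 <= a k) -> ex_series a ->
  a n <= Series a.
Proof. intros H0 Hex. eapply Rle_trans; [|apply (partial_le_series a n); auto].
  apply sum_f_R0_term; auto. Qed.



Lemma ex_series_cmp (a b : nat -> R) : (forall n, 0 <= a n <= b n) -> ex_series b -> ex_series a.
Proof. intros H Hb. apply (ex_series_le a b); auto. intro n. unfold norm; simpl.
  unfold abs; simpl. rewrite Rabs_pos_eq; apply H. Qed.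

Lemma finite_series (a : nat -> R) M : (forall n, (M < n)%nat -> a n = 0) ->
  ex_series a /\ Series a = sum_f_R0 a M.
Proof. intros H.
  assert (Hz : ex_series (fun k => a (S M + k)%nat)).
  { apply (ex_series_ext (fun _ => 0)). intros; rewrite H; auto; lia. apply ex_series_zero. }
  assert (Hex : ex_series a) by (apply (ex_series_incr_n a (S M)); auto).
  split; auto. rewrite (Series_incr_n a (S M)) by (lia || auto). simpl pred.
  rewrite (Series_ext _ (fun _ => 0)) by (intros; rewrite H; auto; lia).
  rewrite Series_zero; ring. Qed.

Lemma rpow_0 q : rpow 0 q = 0.
Proof. unfold rpow. destruct (Req_EM_T 0 0); auto. congruence. Qed.

Lemma rpow_pos a q : 0 < a -> rpow a q = Rpower a q.
Proof. intros. unfold rpow. destruct (Req_EM_T a 0); auto. lra. Qed.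

Lemma rpow_ge0 a q : 0 <= rpow a q.
Proof. unfold rpow. destruct (Req_EM_T a 0). lra. unfold Rpower. left; apply exp_pos. Qed.

Lemma rpow_gt0 a q : 0 < a -> 0 < rpow a q.
Proof. intros. rewrite rpow_pos; auto. unfold Rpower; apply exp_pos. Qed.

Lemma rpow_le a b q : 0 < q -> 0 <= a <= b -> rpow a q <= rpow b q.
Proof. intros Hq [Ha Hab]. destruct Ha as [Ha|Ha].
  rewrite !rpow_pos by lra. apply Rle_Rpower_l; lra.
  subst. rewrite rpow_0. apply rpow_ge0. Qed.

Lemma rpow_lt a b q : 0 < q -> 0 <= a < b -> rpow a q < rpow b q.
Proof. intros Hq [Ha Hab]. destruct Ha as [Ha|Ha].
  rewrite !rpow_pos by lra. apply Rlt_Rpower_l; lra.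
  subst. rewrite rpow_0. apply rpow_gt0; lra. Qed.

Lemma rpow_mult a b q : 0 <= a -> 0 <= b -> rpow (a * b) q = rpow a q * rpow b q.
Proof. intros Ha Hb. destruct Ha as [Ha|Ha]; [destruct Hb as [Hb|Hb]|].
  rewrite !rpow_pos; try nra. rewrite Rpower_mult_distr; auto.
  subst. rewrite Rmult_0_r, rpow_0; ring.
  subst. rewrite Rmult_0_l, rpow_0; ring. Qed.

Lemma rpow_inv a q : 0 < q -> 0 <= a -> rpow (rpow a q) (/ q) = a.
Proof. intros Hq [Ha|Ha]. rewrite (rpow_pos a) by lra.
  rewrite rpow_pos by (unfold Rpower; apply exp_pos).
  rewrite Rpower_mult. rewrite Rinv_r by lra. apply Rpower_1; auto.
  subst. rewrite !rpow_0; auto. Qed.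

Lemma rpow_inv' a q : 0 < q -> 0 <= a -> rpow (rpow a (/ q)) q = a.
Proof. intros Hq Ha. rewrite <- (Rinv_inv q) at 2. apply rpow_inv; auto.
  apply Rinv_0_lt_compat; auto. Qed.

Lemma rpow_le_inv a b q : 0 < q -> 0 <= a -> 0 <= b -> rpow a q <= rpow b q -> a <= b.
Proof. intros Hq Ha Hb H. destruct (Rle_dec a b); auto.
  assert (rpow b q < rpow a q) by (apply rpow_lt; lra). lra. Qed.

Lemma rpow_lt_inv a b q : 0 < q -> 0 <= a -> 0 <= b -> rpow a q < rpow b q -> a < b.
Proof. intros Hq Ha Hb H. destruct (Rlt_dec a b); auto.
  assert (rpow b q <= rpow a q) by (apply rpow_le; lra). lra. Qed.

Lemma rpow_1 q : rpow 1 q = 1.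
Proof. rewrite rpow_pos by lra. unfold Rpower. rewrite ln_1, Rmult_0_r. apply exp_0. Qed.

Lemma rpow_add_le a b q : 0 < q -> 0 <= a -> 0 <= b ->
  rpow (a + b) q <= rpow 2 q * (rpow a q + rpow b q).
Proof. intros Hq Ha Hb.
  assert (Hm : a + b <= 2 * Rmax a b) by (unfold Rmax; destruct (Rle_dec a b); lra).
  eapply Rle_trans. apply rpow_le with (b := 2 * Rmax a b); auto; lra.
  rewrite rpow_mult by (unfold Rmax; destruct (Rle_dec a b); lra).
  apply Rmult_le_compat_l. apply rpow_ge0.
  unfold Rmax; destruct (Rle_dec a b).
  assert (0 <= rpow a q) by apply rpow_ge0; lra.
  assert (0 <= rpow b q) by apply rpow_ge0; lra. Qed.

Lemma rpow_lt_eps a e q : 0 < q -> 0 <= a -> 0 < e -> a < rpow e q -> rpow a (/ q) < e.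
Proof. intros Hq Ha He H. rewrite <- (rpow_inv e q) by lra.
  apply rpow_lt. apply Rinv_0_lt_compat; auto. split; auto. Qed.

Lemma rpow_lt_eps' a e q : 0 < q -> 0 <= a -> 0 < e -> rpow a (/ q) < e -> a < rpow e q.
Proof. intros Hq Ha He H. rewrite <- (rpow_inv' a q) by lra.
  apply rpow_lt; auto. split; auto. apply rpow_ge0. Qed.

Lemma rpow_small q e : 0 < q -> 0 < e -> exists d, 0 < d /\ rpow d q < e.
Proof. intros Hq He. exists (rpow (e/2) (/q)). split. apply rpow_gt0; lra.
  rewrite rpow_inv'; lra. Qed.

Lemma sum_f_R0_add_last (h : nat -> R) k k' : (forall n, 0 <= h n) -> (k < k')%nat ->
  sum_f_R0 h k + h k' <= sum_f_R0 h k'.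
Proof. intros H0 Hk. destruct k'. lia. simpl.
  assert (sum_f_R0 h k <= sum_f_R0 h k') by (apply sum_f_R0_mono; auto; lia). lra. Qed.

Lemma reindex_series (a h : nat -> R) (G : nat -> nat) :
  (forall m, (1 <= m)%nat -> (G m < G (S m))%nat) ->
  (forall n, 0 <= h n) -> ex_series h -> a 0%nat = 0 ->
  (forall m, (1 <= m)%nat -> 0 <= a m <= h (G m)) ->
  ex_series a /\ Series a <= Series h.
Proof.
  intros HG H0 Hh Ha0 Ha.
  assert (Hp : forall n, (1 <= n)%nat -> sum_f_R0 a n <= sum_f_R0 h (G n)).
  { induction n; intros Hn. lia. destruct n.
    simpl. rewrite Ha0. assert (a 1%nat <= h (G 1%nat)) by (apply Ha; lia).
    assert (h (G 1%nat) <= sum_f_R0 h (G 1%nat)) by (apply sum_f_R0_term; auto).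
    lra.
    change (sum_f_R0 a (S (S n))) with (sum_f_R0 a (S n) + a (S (S n))).
    assert (IH := IHn ltac:(lia)).
    assert (a (S (S n)) <= h (G (S (S n)))) by (apply Ha; lia).
    assert (sum_f_R0 h (G (S n)) + h (G (S (S n))) <= sum_f_R0 h (G (S (S n)))).
    { apply sum_f_R0_add_last; auto. apply HG; lia. }
    lra. }
  apply nonneg_bounded_series.
  intros [|n]. lra. apply Ha; lia.
  intros [|n]. simpl. rewrite Ha0. eapply Rle_trans; [|apply (term_le_series h 0)]; auto.
  eapply Rle_trans. apply Hp; lia. apply partial_le_series; auto. Qed.

Section LP.
Variable K : scalars.
Hypothesis HK : K = RScal \/ K = CScal.
Variable p : R.
Hypothesis Hp : 1 <= p.

Lemma p_pos : 0 < p. Proof. lra. Qed.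

Definition Pw (x : seqK K) (m : nat) : R := rpow (sabs K (x m)) p.
Definition Pn (x : seqK K) : R := Series (Pw x).
Definition diff (x y : seqK K) : seqK K := fun m => ssub K (x m) (y m).

Lemma Pw_ge0 x m : 0 <= Pw x m.
Proof. apply rpow_ge0. Qed.

Lemma Pn_ge0 x : ex_series (Pw x) -> 0 <= Pn x.
Proof. intros. eapply Rle_trans; [|apply (term_le_series _ 0)]; auto. apply Pw_ge0. apply Pw_ge0. Qed.

Lemma lpnorm_lt x e : ex_series (Pw x) -> 0 < e -> lpnorm K p x < e <-> Pn x < rpow e p.
Proof. intros Hx He. unfold lpnorm. fold (Pw x). fold (Pn x). split; intro H.
  apply rpow_lt_eps'; auto. apply p_pos. apply Pn_ge0; auto.
  apply rpow_lt_eps; auto. apply p_pos. apply Pn_ge0; auto. Qed.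

Lemma lpdist_lt x y e : ex_series (Pw (diff x y)) -> 0 < e ->
  lpdist K p x y < e <-> Pn (diff x y) < rpow e p.
Proof. intros. unfold lpdist. apply lpnorm_lt; auto. Qed.

Lemma coord_le x m : ex_series (Pw x) -> Pw x m <= Pn x.
Proof. intros. apply term_le_series; auto. apply Pw_ge0. Qed.

Lemma coord_small x m e : ex_series (Pw x) -> 0 < e -> Pn x < rpow e p -> sabs K (x m) < e.
Proof. intros Hx He H. apply (rpow_lt_inv _ _ p). apply p_pos. apply sabs_ge0; auto. lra.
  eapply Rle_lt_trans; [apply coord_le|]; eauto. Qed.

Lemma Pw_diff_le x y z m :
  Pw (diff x z) m <= rpow 2 p * (Pw (diff x y) m + Pw (diff y z) m).
Proof. unfold Pw, diff. eapply Rle_trans; [|apply rpow_add_le].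
  apply rpow_le. apply p_pos. split. apply sabs_ge0; auto. apply ssub_tri; auto.
  apply p_pos. apply sabs_ge0; auto. apply sabs_ge0; auto. Qed.

Lemma diff_series x y z : ex_series (Pw (diff x y)) -> ex_series (Pw (diff y z)) ->
  ex_series (Pw (diff x z)) /\
  Pn (diff x z) <= rpow 2 p * (Pn (diff x y) + Pn (diff y z)).
Proof. intros H1 H2.
  assert (E : ex_series (fun m => rpow 2 p * (Pw (diff x y) m + Pw (diff y z) m))).
  { apply ex_series_scal_l with (c := rpow 2 p) (a := fun m => Pw (diff x y) m + Pw (diff y z) m).
    apply (ex_series_plus (Pw (diff x y)) (Pw (diff y z))); auto. }
  assert (Hb : forall m, 0 <= Pw (diff x z) m <= rpow 2 p * (Pw (diff x y) m + Pw (diff y z) m)).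
  { intros; split. apply Pw_ge0. apply Pw_diff_le. }
  split. apply (ex_series_cmp _ _ Hb E).
  unfold Pn. eapply Rle_trans. apply (Series_le _ _ Hb E).
  rewrite Series_scal_l, Series_plus; auto. lra. Qed.

Definition zeroK : seqK K := fun _ => s0 K.

Lemma diff_zero x : diff x zeroK = x.
Proof. unfold diff, zeroK. apply FunctionalExtensionality.functional_extensionality.
  intro m. apply ssub_0r; auto. Qed.

Lemma Pw_diff_sym x y m : Pw (diff x y) m = Pw (diff y x) m.
Proof. unfold Pw, diff. rewrite ssub_sym; auto. Qed.

Lemma diff_series_lp x y : ex_series (Pw x) -> ex_series (Pw y) -> ex_series (Pw (diff x y)).
Proof. intros Hx Hy. apply (diff_series x zeroK y).
  rewrite diff_zero; auto.
  apply (ex_series_ext (Pw (diff y zeroK))). intro; apply Pw_diff_sym. rewrite diff_zero; auto. Qed.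

Lemma Pw_zero_at x m : x m = s0 K -> Pw x m = 0.
Proof. intros E. unfold Pw. rewrite E, sabs_0, rpow_0; auto. Qed.

Lemma finite_lp x M : x 0%nat = s0 K -> (forall m, (M < m)%nat -> x m = s0 K) ->
  in_lp K p x /\ Pn x = sum_f_R0 (Pw x) M.
Proof. intros H0 HM. destruct (finite_series (Pw x) M) as [A B].
  intros; apply Pw_zero_at; auto. split; [split|]; auto. Qed.

Variable f : nat -> nat.
Variable w : nat -> K.
Hypothesis Hf : admissible_map f.

Lemma f_mono a b : (1 <= a)%nat -> (a < b)%nat -> (f a < f b)%nat.
Proof. destruct Hf as [_ H]. intros Ha Hab. induction Hab. apply H; auto.
  specialize (H m ltac:(lia)). lia. Qed.

Lemma f_ge m : (1 <= m)%nat -> (S m <= f m)%nat.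
Proof. destruct Hf as [H1 H]. induction m; intros Hm. lia. destruct m. lia.
  specialize (IHm ltac:(lia)). specialize (H (S m) ltac:(lia)). lia. Qed.

Definition F n m := Nat.iter n f m.

Lemma F_ge n m : (1 <= m)%nat -> (m + n <= F n m)%nat.
Proof. induction n; intros Hm; unfold F in *; simpl. lia.
  specialize (IHn Hm). assert (H := f_ge (Nat.iter n f m) ltac:(lia)). lia. Qed.

Lemma F_mono n a b : (1 <= a)%nat -> (a < b)%nat -> (F n a < F n b)%nat.
Proof. induction n; intros Ha Hab; unfold F in *; simpl. auto.
  apply f_mono. assert (H := F_ge n a Ha). unfold F in H. lia. auto. Qed.

Lemma F_inj n a b : (1 <= a)%nat -> (1 <= b)%nat -> F n a = F n b -> a = b.
Proof. intros Ha Hb E. destruct (Nat.lt_total a b) as [H|[H|H]]; auto.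
  apply (F_mono n) in H; auto; lia. apply (F_mono n) in H; auto; lia. Qed.

Lemma F_S n m : F (S n) m = F n (f m).
Proof. unfold F. apply Nat.iter_succ_r. Qed.

Definition W m n := Wprod K f w m n.

Lemma W_S m n : W m (S n) = smul K (w (f m)) (W (f m) n).
Proof. unfold W. induction n. simpl. rewrite smul_1l, smul_comm, smul_1l; auto.
  change (Wprod K f w m (S (S n))) with (smul K (Wprod K f w m (S n)) (w (Nat.iter (S (S n)) f m))).
  rewrite IHn. change (Wprod K f w (f m) (S n)) with (smul K (Wprod K f w (f m) n) (w (Nat.iter (S n) f (f m)))).
  rewrite <- Nat.iter_succ_r. rewrite smul_assoc; auto. Qed.

Lemma Tn_formula n x m : (1 <= m)%nat ->
  pshift_iter K n f w x m = smul K (W m n) (x (F n m)).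
Proof. revert m. induction n; intros m Hm. simpl. unfold W; simpl. rewrite smul_1l; auto.
  unfold pshift_iter. rewrite Nat.iter_succ. fold (pshift_iter K n f w x).
  destruct m. lia. unfold pshift. rewrite IHn. rewrite F_S, W_S.
  rewrite smul_assoc; auto. assert (H := f_ge (S m) Hm). lia. Qed.

Lemma Tn_0 n x : (1 <= n)%nat -> pshift_iter K n f w x 0%nat = s0 K.
Proof. intros. destruct n. lia. unfold pshift_iter; rewrite Nat.iter_succ. reflexivity. Qed.

Lemma Tn_0' n x : x 0%nat = s0 K -> pshift_iter K n f w x 0%nat = s0 K.
Proof. intros. destruct n. auto. apply Tn_0; lia. Qed.

Lemma W_bound B m n : 0 <= B -> (forall m, (1 <= m)%nat -> sabs K (w (f m)) <= B) ->
  (1 <= m)%nat -> sabs K (W m n) <= B ^ n.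
Proof. intros HB Hw. revert m. induction n; intros m Hm. unfold W; simpl. rewrite sabs_1; auto; lra.
  rewrite W_S, sabs_mul; auto. simpl. apply Rmult_le_compat; auto.
  apply sabs_ge0; auto. apply sabs_ge0; auto. apply IHn. assert (H := f_ge m Hm). lia. Qed.

Lemma Tn_bound B n x : 0 <= B -> (forall m, (1 <= m)%nat -> sabs K (w (f m)) <= B) ->
  in_lp K p x ->
  in_lp K p (pshift_iter K n f w x) /\
  Pn (pshift_iter K n f w x) <= rpow (B ^ n) p * Pn x.
Proof. intros HB Hw [Hx0 Hx].
  assert (HR := reindex_series (Pw (pshift_iter K n f w x)) (fun j => rpow (B^n) p * Pw x j) (F n)).
  destruct HR as [E S].
  - intros m Hm. apply F_mono; auto.
  - intros; apply Rmult_le_pos. apply rpow_ge0. apply Pw_ge0.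
  - apply ex_series_scal_l with (c := rpow (B^n) p) (a := Pw x); auto.
  - apply Pw_zero_at. apply Tn_0'; auto.
  - intros m Hm. split. apply Pw_ge0. unfold Pw. rewrite Tn_formula by auto.
    rewrite sabs_mul by auto. rewrite <- rpow_mult. apply rpow_le. apply p_pos.
    split. apply Rmult_le_pos; apply sabs_ge0; auto.
    apply Rmult_le_compat_r. apply sabs_ge0; auto. apply W_bound; auto.
    apply pow_le; auto. apply sabs_ge0; auto.
  - split. split; auto. apply Tn_0'; auto. unfold Pn. rewrite Series_scal_l in S. auto. Qed.

End LP.

Definition dec (c m : nat) : nat :=
  fst (Cantor.of_nat (Nat.iter m (fun c => snd (Cantor.of_nat c)) c)).

Lemma dec_surj (v : nat -> nat) M : exists c, forall m, (m <= M)%nat -> dec c m = v m.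
Proof. revert v. induction M; intros v.
  - exists (Cantor.to_nat (v 0%nat, 0%nat)). intros m Hm. inversion Hm; subst.
    unfold dec. change (Nat.iter 0 ?g ?c) with c. rewrite Cantor.cancel_of_to. reflexivity.
  - destruct (IHM (fun m => v (S m))) as [c' Hc'].
    exists (Cantor.to_nat (v 0%nat, c')). intros [|m] Hm.
    unfold dec. change (Nat.iter 0 ?g ?c) with c. rewrite Cantor.cancel_of_to. reflexivity.
    unfold dec. rewrite Nat.iter_succ_r. rewrite Cantor.cancel_of_to. cbv beta. change (snd (?a, ?b)) with b.
    apply Hc'. lia. Qed.

Lemma dec_surj_inf (v : nat -> nat) M L : exists c, (L <= c)%nat /\ forall m, (m <= M)%nat -> dec c m = v m.
Proof. destruct (dec_surj (fun m => if Nat.eqb m (S M) then L else v m) (S M)) as [c Hc].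
  exists c. split.
  - assert (H := Hc (S M) (le_n _)). rewrite Nat.eqb_refl in H. rewrite <- H.
    assert (B : forall n, (fst (of_nat n) <= n /\ snd (of_nat n) <= n)%nat).
    { intro n. rewrite <- (Cantor.cancel_to_of n) at 2 4. destruct (of_nat n) as [a b]. cbn [fst snd].
      assert (H' := Cantor.to_nat_non_decreasing a b). lia. }
    assert (B2 : forall k, (Nat.iter k (fun c0 : nat => snd (of_nat c0)) c <= c)%nat).
    { induction k. simpl; lia. rewrite Nat.iter_succ. specialize (B (Nat.iter k (fun c0 : nat => snd (of_nat c0)) c)). lia. }
    unfold dec. specialize (B (Nat.iter (S M) (fun c0 : nat => snd (of_nat c0)) c)). specialize (B2 (S M)). lia.
  - intros m Hm. rewrite Hc by lia. destruct (Nat.eqb_spec m (S M)); auto. lia. Qed.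

Definition qR (n : nat) : R :=
  let (a, r) := Cantor.of_nat n in let (b, d) := Cantor.of_nat r in
  (INR a - INR b) / (INR d + 1).

Lemma qR_dense x e : 0 < e -> exists n, Rabs (qR n - x) < e.
Proof. intros He.
  destruct (archimed (/ e)) as [Hu _].
  set (d := Z.to_nat (up (/ e))).
  assert (Hd : / e < INR d + 1).
  { unfold d. destruct (Z_lt_le_dec (up (/e)) 0).
    - assert (IZR (up (/ e)) < 0) by (apply IZR_lt; auto).
      pose proof (pos_INR (Z.to_nat (up (/ e)))). assert (0 < / e) by (apply Rinv_0_lt_compat; auto). lra.
    - rewrite INR_IZR_INZ, Z2Nat.id by auto. lra. }
  assert (HD : 0 < INR d + 1) by (pose proof (pos_INR d); lra).
  set (z := up (x * (INR d + 1))).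
  destruct (archimed (x * (INR d + 1))) as [Hz1 Hz2]. fold z in Hz1, Hz2.
  assert (Hab : exists a b, INR a - INR b = IZR z).
  { destruct (Z_lt_le_dec z 0).
    - exists 0%nat, (Z.to_nat (- z)). rewrite (INR_IZR_INZ (Z.to_nat _)), Z2Nat.id by lia. simpl.
      rewrite opp_IZR. ring.
    - exists (Z.to_nat z), 0%nat. rewrite (INR_IZR_INZ (Z.to_nat _)), Z2Nat.id by lia. simpl. ring. }
  destruct Hab as [a [b Hab]].
  exists (Cantor.to_nat (a, Cantor.to_nat (b, d))). unfold qR.
  rewrite !Cantor.cancel_of_to. rewrite Hab.
  assert (H1 : 1 / (INR d + 1) < e).
  { assert (H2 : 1 < e * (INR d + 1)).
    { apply (Rmult_lt_compat_l e) in Hd; auto. rewrite Rinv_r in Hd; lra. }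
    apply (Rmult_lt_reg_r (INR d + 1)); auto. unfold Rdiv. rewrite Rmult_assoc, Rinv_l; lra. }
  assert (E : IZR z / (INR d + 1) - x = (IZR z - x * (INR d + 1)) / (INR d + 1)) by (field; lra).
  rewrite E. unfold Rdiv. rewrite Rabs_mult. rewrite Rabs_pos_eq by lra.
  rewrite (Rabs_pos_eq (/ _)) by (left; apply Rinv_0_lt_compat; auto).
  apply Rle_lt_trans with (1 * / (INR d + 1)). apply Rmult_le_compat_r.
  left; apply Rinv_0_lt_compat; auto. auto. lra. Qed.

Definition qC (n : nat) : C := let (n1, n2) := Cantor.of_nat n in (qR n1, qR n2).

Lemma sqrt2_lt2 : sqrt 2 < 2.
Proof. assert (H := sqrt_sqrt 2 ltac:(lra)). assert (H0 := sqrt_pos 2). nra. Qed.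

Lemma qC_dense (x : C) e : 0 < e -> exists n, Cmod (Cplus (qC n) (Copp x)) < e.
Proof. intros He. destruct (qR_dense (fst x) (e/2)) as [n1 H1]. lra.
  destruct (qR_dense (snd x) (e/2)) as [n2 H2]. lra.
  exists (Cantor.to_nat (n1, n2)). unfold qC. rewrite Cantor.cancel_of_to.
  eapply Rle_lt_trans. apply Cmod_2Rmax. simpl.
  assert (Rmax (Rabs (qR n1 + - fst x)) (Rabs (qR n2 + - snd x)) < e/2).
  { unfold Rmax. destruct (Rle_dec _ _); auto. }
  pose proof sqrt2_lt2. pose proof (sqrt_pos 2).
  assert (0 <= Rmax (Rabs (qR n1 + - fst x)) (Rabs (qR n2 + - snd x))).
  { eapply Rle_trans; [apply Rabs_pos|apply Rmax_l]. }
  nra. Qed.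

Section Dense.
Variable K : scalars.
Hypothesis HK : K = RScal \/ K = CScal.

Lemma dense_q : exists q : nat -> K, forall x e, 0 < e -> exists n, sabs K (ssub K (q n) x) < e.
Proof. destruct HK; subst. exists qR. intros. apply qR_dense; auto.
  exists qC. intros. apply qC_dense; auto. Qed.

Lemma nz_small e : 0 < e -> exists y : K, y <> s0 K /\ sabs K y < e.
Proof. intros He. destruct HK; subst.
  exists (e/2). simpl. split. lra. rewrite Rabs_pos_eq; lra.
  exists (RtoC (e/2)). simpl. split. intro H. injection H. lra.
  rewrite Cmod_R. rewrite Rabs_pos_eq; lra. Qed.

Lemma dense_q_nz (q : nat -> K) : (forall x e, 0 < e -> exists n, sabs K (ssub K (q n) x) < e) ->
  forall x e, 0 < e -> exists n, sabs K (ssub K (q n) x) < e /\ q n <> s0 K.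
Proof. intros Hq x e He.
  destruct (classic (x = s0 K)) as [Ex|Ex].
  - destruct (nz_small (e/2)) as [y [Hy1 Hy2]]. lra.
    destruct (Hq y (Rmin (e/2) (sabs K y))) as [n Hn].
    apply Rmin_glb_lt. lra. apply sabs_pos; auto.
    exists n. split. subst x. eapply Rle_lt_trans. apply (ssub_tri K HK _ y).
    rewrite ssub_0r by auto. assert (Rmin (e/2) (sabs K y) <= e/2) by apply Rmin_l. lra.
    intro E. rewrite E in Hn. rewrite ssub_0l in Hn by auto.
    assert (Rmin (e/2) (sabs K y) <= sabs K y) by apply Rmin_r. lra.
  - destruct (Hq x (Rmin e (sabs K x))) as [n Hn].
    apply Rmin_glb_lt. lra. apply sabs_pos; auto.
    exists n. split. eapply Rlt_le_trans; eauto. apply Rmin_l.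
    intro E. rewrite E in Hn. rewrite ssub_0l in Hn by auto.
    assert (Rmin e (sabs K x) <= sabs K x) by apply Rmin_r. lra. Qed.

Lemma fin_approx (q : nat -> K) : (forall x e, 0 < e -> exists n, sabs K (ssub K (q n) x) < e) ->
  forall (t : nat -> K) e M L, 0 < e -> exists c, (L <= c)%nat /\ forall m, (m <= M)%nat ->
    sabs K (ssub K (q (dec c m)) (t m)) < e /\ q (dec c m) <> s0 K.
Proof. intros Hq t e M L He.
  assert (H : forall m, exists n, sabs K (ssub K (q n) (t m)) < e /\ q n <> s0 K).
  { intro m. apply dense_q_nz; auto. }
  set (v := fun m => proj1_sig (constructive_indefinite_description _ (H m))).
  destruct (dec_surj_inf v M L) as [c [Hc1 Hc2]]. exists c. split; auto. intros m Hm.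
  rewrite Hc2 by auto. unfold v. destruct (constructive_indefinite_description _ (H m)); simpl; auto. Qed.

End Dense.

Lemma uniform_nat (P : nat -> nat -> Prop) N :
  (forall i, (i < N)%nat -> exists K0, forall k, (K0 <= k)%nat -> P i k) ->
  exists K0, forall i, (i < N)%nat -> forall k, (K0 <= k)%nat -> P i k.
Proof. induction N; intros H. exists 0%nat; intros; lia.
  destruct IHN as [K1 H1]. intros; apply H; lia.
  destruct (H N ltac:(lia)) as [K2 H2]. exists (Nat.max K1 K2). intros i Hi k Hk.
  destruct (Nat.eq_dec i N). subst; apply H2; lia. apply H1; lia. Qed.

Lemma uniform_R (P : nat -> R -> Prop) N :
  (forall i, (i < N)%nat -> exists B, forall B', B <= B' -> P i B') ->
  exists B, forall i, (i < N)%nat -> forall B', B <= B' -> P i B'.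
Proof. induction N; intros H. exists 0; intros; lia.
  destruct IHN as [K1 H1]. intros; apply H; lia.
  destruct (H N ltac:(lia)) as [K2 H2]. exists (Rmax K1 K2). intros i Hi k Hk.
  destruct (Nat.eq_dec i N). subst; apply H2. eapply Rle_trans; [apply Rmax_r|]; eauto.
  apply H1. lia. eapply Rle_trans; [apply Rmax_l|]; eauto. Qed.

Section KReal.
Variable K : scalars.
Hypothesis HK : K = RScal \/ K = CScal.

Lemma big_W (W u zt : K) c eta B : sabs K (ssub K (smul K W u) zt) < eta -> sabs K u < eta ->
  c <= sabs K zt -> 0 < eta -> 2 * eta <= c -> 2 * eta * (Rabs B + 1) <= c -> B < sabs K W.
Proof. intros H1 H2 H3 H4 H5 H6.
  assert (R1 := ssub_rev_tri K HK zt (smul K W u)). rewrite ssub_sym in R1 by auto.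
  rewrite sabs_mul in R1 by auto.
  assert (0 <= sabs K W) by (apply sabs_ge0; auto). assert (0 <= sabs K u) by (apply sabs_ge0; auto).
  destruct (Rlt_dec B (sabs K W)) as [|Hn]; auto. exfalso.
  assert (sabs K W <= Rabs B) by (pose proof (Rle_abs B); lra).
  assert (sabs K W * sabs K u <= Rabs B * eta) by (apply Rmult_le_compat; lra).
  pose proof (Rabs_pos B). nra. Qed.

Lemma ratio_small (A B al be : K) eta cm d eps : sabs K (ssub K A al) < eta ->
  sabs K (ssub K B be) < eta -> cm <= sabs K al -> 2 * eta <= cm -> sabs K be <= d ->
  0 < eta -> 2 * (d + eta) < eps * cm -> sabs K (sdiv K B A) < eps.
Proof. intros H1 H2 H3 H4 H5 H6 H7.
  assert (R1 := ssub_rev_tri K HK al A). rewrite ssub_sym in R1 by auto.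
  assert (R2 := ssub_tri K HK B be (s0 K)). rewrite !ssub_0r in R2 by auto.
  assert (HA : cm / 2 <= sabs K A) by lra.
  assert (Hcm : 0 < cm) by lra.
  rewrite sabs_div by auto. apply (Rmult_lt_reg_r (sabs K A)). lra.
  unfold Rdiv. rewrite Rmult_assoc, Rinv_l by lra. rewrite Rmult_1_r.
  assert (0 < eps). { assert (0 <= d) by (pose proof (sabs_ge0 K HK be); lra).
    destruct (Rle_dec eps 0); auto. nra. lra. }
  assert (eps * (cm / 2) <= eps * sabs K A) by (apply Rmult_le_compat_l; lra). nra. Qed.

Lemma ratio_close (A B al be : K) eta cm Am eps : sabs K (ssub K A al) < eta ->
  sabs K (ssub K B be) < eta -> cm <= sabs K al -> sabs K al <= Am -> sabs K be <= Am ->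
  0 < cm -> 2 * eta <= cm -> 4 * eta * Am < eps * (cm * cm) ->
  sabs K (ssub K (sdiv K B A) (sdiv K be al)) < eps.
Proof. intros H1 H2 H3 H3' H5 Hcm H4 H7.
  assert (R1 := ssub_rev_tri K HK al A). rewrite ssub_sym in R1 by auto.
  assert (HA : cm / 2 <= sabs K A) by lra.
  assert (NA : A <> s0 K). { intro E; rewrite E, sabs_0 in HA by auto; lra. }
  assert (Nal : al <> s0 K). { intro E; rewrite E, sabs_0 in H3 by auto; lra. }
  rewrite sdiv_diff by auto. rewrite sabs_div by auto. rewrite sabs_mul by auto.
  assert (Nm : sabs K (ssub K (smul K (ssub K B be) al) (smul K be (ssub K A al))) <=
     eta * Am + Am * eta).
  { eapply Rle_trans. apply sabs_sub; auto. rewrite !sabs_mul by auto.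
    pose proof (sabs_ge0 K HK al). pose proof (sabs_ge0 K HK be).
    pose proof (sabs_ge0 K HK (ssub K B be)). pose proof (sabs_ge0 K HK (ssub K A al)).
    apply Rplus_le_compat; apply Rmult_le_compat; lra. }
  assert (D : cm / 2 * cm <= sabs K A * sabs K al) by (apply Rmult_le_compat; lra).
  apply (Rmult_lt_reg_r (sabs K A * sabs K al)). nra.
  unfold Rdiv. rewrite Rmult_assoc, Rinv_l by nra. rewrite Rmult_1_r.
  assert (0 < eps) by (pose proof (sabs_ge0 K HK (ssub K A al)); nra).
  nra. Qed.

Lemma finite_min (a : nat -> K) M : (forall j, (1 <= j <= M)%nat -> a j <> s0 K) ->
  exists cm Am, 0 < cm /\ 0 < Am /\ forall j, (1 <= j <= M)%nat -> cm <= sabs K (a j) <= Am.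
Proof. induction M; intros H. exists 1, 1. split; [lra|split; [lra|intros; lia]].
  destruct IHM as [c [A [Hc [HA HH]]]]. intros; apply H; lia.
  assert (P := sabs_pos K HK (a (S M)) (H (S M) ltac:(lia))).
  exists (Rmin c (sabs K (a (S M)))), (Rmax A (sabs K (a (S M)))). split.
  apply Rmin_glb_lt; lra. split. eapply Rlt_le_trans; [|apply Rmax_l]; lra.
  intros j Hj. destruct (Nat.eq_dec j (S M)). subst. split; [apply Rmin_r|apply Rmax_r].
  destruct (HH j ltac:(lia)). split. eapply Rle_trans; [apply Rmin_l|]; auto.
  eapply Rle_trans; [|apply Rmax_l]; auto. Qed.

Variable p : R.
Hypothesis Hp : 1 <= p.

Lemma coord_tends0 (x : seqK K) : ex_series (Pw K p x) -> forall e, 0 < e ->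
  exists J, forall j, (J <= j)%nat -> sabs K (x j) < e.
Proof. intros Hx e He. apply ex_series_lim_0 in Hx. apply is_lim_seq_spec in Hx.
  assert (Hr : 0 < rpow e p) by (apply rpow_gt0; auto).
  destruct (Hx (mkposreal _ Hr)) as [J HJ]. exists J. intros j Hj.
  specialize (HJ j Hj). simpl in HJ. rewrite Rminus_0_r, Rabs_pos_eq in HJ by apply Pw_ge0.
  apply (rpow_lt_inv _ _ p). lra. apply sabs_ge0; auto. lra. auto. Qed.

Lemma ex_series_eventually (a b : nat -> R) M : (forall n, (M < n)%nat -> a n = b n) ->
  ex_series a -> ex_series b.
Proof. intros H Ha. apply (ex_series_incr_n b (S M)). apply (ex_series_incr_n a (S M)) in Ha.
  apply (ex_series_ext _ _ (fun k => H (S M + k)%nat ltac:(lia))) ; auto. Qed.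

Lemma lp_dist_coord (x y : seqK K) e m : ex_series (Pw K p x) -> ex_series (Pw K p y) ->
  0 < e -> lpdist K p x y < e -> sabs K (ssub K (x m) (y m)) < e.
Proof. intros Hx Hy He H. assert (E := diff_series_lp K HK p Hp x y Hx Hy).
  apply lpdist_lt in H; auto. apply (coord_small K HK p Hp (diff K x y) m e E He H). Qed.

Lemma lp_norm_coord (x : seqK K) e m : ex_series (Pw K p x) ->
  0 < e -> lpnorm K p x < e -> sabs K (x m) < e.
Proof. intros Hx He H. apply lpnorm_lt in H; auto. apply (coord_small K HK p Hp x m e Hx He H). Qed.

End KReal.

Definition dsum (L : list (nat * nat)) (G : nat * nat -> nat) (c : nat * nat -> R) (j : nat) : R :=
  fold_right (fun lm acc => (if Nat.eqb (G lm) j then c lm else 0) + acc) 0 L.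

Definition lsum (L : list (nat * nat)) (c : nat * nat -> R) : R :=
  fold_right (fun lm acc => c lm + acc) 0 L.

Lemma delta_sum k c n : sum_f_R0 (fun j => if Nat.eqb k j then c else 0) n = if Nat.leb k n then c else 0.
Proof. induction n; simpl.
  - destruct k; simpl; auto.
  - rewrite IHn. destruct (Nat.leb_spec k n); destruct (Nat.eqb_spec k (S n));
      destruct (Nat.leb_spec k (S n)); try lia; lra. Qed.

Lemma dsum_series L G c : (forall lm, 0 <= c lm) ->
  ex_series (dsum L G c) /\ Series (dsum L G c) = lsum L c.
Proof. intros Hc. induction L as [|x L IH].
  - unfold dsum; simpl. split. apply ex_series_zero. apply Series_zero.
  - destruct IH as [IH1 IH2].
    destruct (finite_series (fun j => if Nat.eqb (G x) j then c x else 0) (G x)) as [D1 D2].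
    { intros n Hn. destruct (Nat.eqb_spec (G x) n); auto; lia. }
    rewrite delta_sum, Nat.leb_refl in D2.
    assert (E : forall j, dsum (x :: L) G c j = (if Nat.eqb (G x) j then c x else 0) + dsum L G c j)
      by (intros; reflexivity).
    split. apply (ex_series_ext _ _ (fun j => eq_sym (E j))).
    apply (ex_series_plus (fun j => if Nat.eqb (G x) j then c x else 0) (dsum L G c)); auto.
    rewrite (Series_ext _ _ E). rewrite Series_plus; auto. rewrite D2, IH2. reflexivity. Qed.

Lemma dsum_nonneg L G c j : (forall lm, 0 <= c lm) -> 0 <= dsum L G c j.
Proof. intros Hc. induction L. unfold dsum; simpl; lra.
  assert (E : dsum (a :: L) G c j = (if Nat.eqb (G a) j then c a else 0) + dsum L G c j) by reflexivity.
  rewrite E. assert (0 <= (if Nat.eqb (G a) j then c a else 0))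
  by (destruct (Nat.eqb _ _); auto; lra). lra. Qed.

Lemma dsum_ge L G c j lm : (forall lm, 0 <= c lm) -> In lm L -> G lm = j -> c lm <= dsum L G c j.
Proof. intros Hc Hin HG. induction L as [|x L IH]. destruct Hin.
  assert (E : dsum (x :: L) G c j = (if Nat.eqb (G x) j then c x else 0) + dsum L G c j) by reflexivity.
  rewrite E. destruct Hin as [<-|Hin].
  - rewrite HG, Nat.eqb_refl. pose proof (dsum_nonneg L G c j Hc). lra.
  - assert (0 <= (if Nat.eqb (G x) j then c x else 0)) by (destruct (Nat.eqb _ _); auto; lra).
    specialize (IH Hin). lra. Qed.

Lemma lsum_bound L c e : (forall lm, In lm L -> c lm <= e) -> lsum L c <= INR (length L) * e.
Proof. induction L as [|x L IH]; intros H. unfold lsum; simpl. lra.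
  change (length (x :: L)) with (S (length L)). unfold lsum. cbn [fold_right].
  unfold lsum in IH. assert (c x <= e) by (apply H; left; auto).
  assert (fold_right (fun lm acc => c lm + acc) 0 L <= INR (length L) * e)
    by (apply IH; intros; apply H; right; auto).
  rewrite S_INR. lra. Qed.

Lemma geom_tail0 r J : (J <= r)%nat -> sum_f_R0 (fun t => if Nat.ltb r t then (/4) ^ t else 0) J = 0.
Proof. induction J; intros HJ; simpl. destruct (Nat.ltb_spec r 0); auto; lia.
  rewrite IHJ by lia. destruct (Nat.ltb_spec r (S J)); try lia. ring. Qed.

Lemma geom_tail1 r J : (r <= J)%nat ->
  sum_f_R0 (fun t => if Nat.ltb r t then (/4) ^ t else 0) J = ((/4)^r - (/4)^J) / 3.
Proof. induction J; intros HJ.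
  - assert (r = 0%nat) by lia. subst. simpl. field.
  - destruct (Nat.eq_dec r (S J)). subst. rewrite geom_tail0 by lia. field.
    simpl. rewrite IHJ by lia. destruct (Nat.ltb_spec r (S J)); try lia. field. Qed.

Lemma geom_tail r J : sum_f_R0 (fun t => if Nat.ltb r t then (/4) ^ t else 0) J <= (/4) ^ r / 3.
Proof. assert (0 < (/4)^r) by (apply pow_lt; lra).
  destruct (Nat.le_gt_cases J r). rewrite geom_tail0 by auto. lra.
  rewrite geom_tail1 by lia. assert (0 < (/4)^J) by (apply pow_lt; lra). lra. Qed.

Lemma geom_all J : sum_f_R0 (fun t => (/4) ^ t) J <= 4 / 3.
Proof. assert (H := geom_tail1 0 (S J) ltac:(lia)).
  assert (E : sum_f_R0 (fun t => if Nat.ltb 0 t then (/4) ^ t else 0) (S J) =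
              sum_f_R0 (fun t => (/4) ^ t) J * / 4).
  { clear H. induction J. simpl. field. rewrite tech5. rewrite IHJ.
    rewrite (tech5 (fun t => (/4)^t)). destruct (Nat.ltb_spec 0 (S (S J))); try lia.
    change ((/4) ^ S (S J)) with (/4 * (/4) ^ (S J)). ring. }
  rewrite E in H. simpl in H. assert (0 < (/4) ^ J) by (apply pow_lt; lra).
  assert (sum_f_R0 (fun t : nat => (/ 4) ^ t) J = 4 * ((1 - / 4 * (/ 4) ^ J) / 3)).
  { rewrite <- H. field. } lra. Qed.

Section KSum.
Variable K : scalars.
Hypothesis HK : K = RScal \/ K = CScal.

Fixpoint ksum (g : nat -> K) (n : nat) : K :=
  match n with O => g 0%nat | S n' => sadd K (ksum g n') (g (S n')) end.

Lemma ksum_zero g n : (forall t, (t <= n)%nat -> g t = s0 K) -> ksum g n = s0 K.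
Proof. induction n; intros H; simpl. apply H; lia. rewrite IHn by (intros; apply H; lia).
  rewrite H by lia. apply sadd_0l; auto. Qed.

Lemma ksum_one g n r : (r <= n)%nat -> (forall t, (t <= n)%nat -> t <> r -> g t = s0 K) -> ksum g n = g r.
Proof. induction n; intros Hr H; simpl. assert (r = 0%nat) by lia. subst; auto.
  destruct (Nat.eq_dec r (S n)). subst. rewrite ksum_zero. apply sadd_0l; auto.
  intros; apply H; lia. rewrite IHn by (auto; lia). rewrite (H (S n)) by lia. apply sadd_0r; auto. Qed.

Lemma ksum_split g n r : (r <= n)%nat -> (forall t, (t < r)%nat -> g t = s0 K) ->
  ksum g n = sadd K (g r) (ksum (fun t => if Nat.ltb r t then g t else s0 K) n).
Proof. intros Hr H. induction Hr.
  - rewrite (ksum_one g r r) by (auto; intros; apply H; lia).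
    rewrite ksum_zero. rewrite sadd_0r; auto. intros t Ht. destruct (Nat.ltb_spec r t); auto; lia.
  - simpl. rewrite IHHr. destruct (Nat.ltb_spec r (S m)); try lia. apply sadd_assoc; auto. Qed.

Lemma ksum_Pw p g n : 0 < p ->
  (forall t t', (t <= n)%nat -> (t' <= n)%nat -> g t <> s0 K -> g t' <> s0 K -> t = t') ->
  rpow (sabs K (ksum g n)) p <= sum_f_R0 (fun t => rpow (sabs K (g t)) p) n.
Proof. intros Hp H.
  destruct (classic (exists t, (t <= n)%nat /\ g t <> s0 K)) as [[t [Ht Hg]]|Hn].
  - rewrite (ksum_one g n t Ht). apply (sum_f_R0_term (fun t => rpow (sabs K (g t)) p)); auto. intros; apply rpow_ge0.
    intros t' Ht' Hne. destruct (classic (g t' = s0 K)); auto. exfalso; apply Hne. apply (H t' t); auto.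
  - rewrite ksum_zero. rewrite sabs_0, rpow_0 by auto. apply sum_f_R0_nonneg. intros; apply rpow_ge0.
    intros t Ht. destruct (classic (g t = s0 K)); auto. exfalso; apply Hn; eauto. Qed.

End KSum.

Lemma sum_exchange (a : nat -> nat -> R) A B :
  sum_f_R0 (fun j => sum_f_R0 (fun t => a t j) B) A = sum_f_R0 (fun t => sum_f_R0 (fun j => a t j) A) B.
Proof. induction A. simpl. reflexivity.
  rewrite tech5, IHA. rewrite <- sum_plus. apply sum_eq. intros t _. rewrite tech5. reflexivity. Qed.

Lemma double_bound (a : nat -> nat -> R) Jm : (forall t j, 0 <= a t j) ->
  sum_f_R0 (fun j => sum_f_R0 (fun t => a t j) j) Jm <=
  sum_f_R0 (fun t => sum_f_R0 (fun j => a t j) Jm) Jm.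
Proof. intros H. rewrite <- sum_exchange. apply sum_f_R0_le. intros j Hj.
  apply sum_f_R0_mono; auto. Qed.

Fixpoint recst {A : Type} (g : nat -> nat -> A) (h : A -> nat) (r : nat) : A :=
  match r with O => g 0%nat 0%nat | S r' => g (S r') (h (recst g h r')) end.

Lemma nat_above (B : R) : exists n, B <= INR n.
Proof. destruct (archimed B) as [H1 _]. destruct (Z_lt_le_dec (up B) 0).
  exists 0%nat. simpl. assert (IZR (up B) < 0) by (apply IZR_lt; auto). lra.
  exists (Z.to_nat (up B)). rewrite INR_IZR_INZ, Z2Nat.id by auto. lra. Qed.

Lemma incr_ge (nk : nat -> nat) : (forall k, (nk k < nk (S k))%nat) -> forall k, (k <= nk k)%nat.
Proof. intros H k. induction k. lia. specialize (H k). lia. Qed.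

Fixpoint recseq (g : nat -> nat -> nat) (k : nat) : nat :=
  match k with O => g 0%nat 0%nat | S k' => g (S k') (recseq g k') end.

Lemma recseq_eq g k : exists prev, recseq g k = g k prev.
Proof. destruct k; simpl; eauto. Qed.

Section Main.
Variable K : scalars.
Hypothesis HK : K = RScal \/ K = CScal.
Variable p : R.
Hypothesis Hp : 1 <= p.
Variable N : nat.
Hypothesis HN : (2 <= N)%nat.
Variable f : nat -> nat -> nat.
Variable w : nat -> nat -> K.
Hypothesis Hf : forall i, (i < N)%nat -> admissible_map (f i).
Hypothesis Hw : forall i, (i < N)%nat -> admissible_weight K (f i) (w i).

Definition T i n x := pshift_iter K n (f i) (w i) x.
Definition Wi i m n := Wprod K (f i) (w i) m n.
Definition Fi i n m := Nat.iter n (f i) m.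

Lemma T_formula i n x m : (i < N)%nat -> (1 <= m)%nat -> T i n x m = smul K (Wi i m n) (x (Fi i n m)).
Proof. intros Hi Hm. apply (Tn_formula K HK (f i) (w i) (Hf i Hi) n x m Hm). Qed.

Lemma Fi_ge i n m : (i < N)%nat -> (1 <= m)%nat -> (m + n <= Fi i n m)%nat.
Proof. intros Hi Hm. apply (F_ge (f i) (Hf i Hi) n m Hm). Qed.

Lemma Fi_inj i n a b : (i < N)%nat -> (1 <= a)%nat -> (1 <= b)%nat -> Fi i n a = Fi i n b -> a = b.
Proof. intros Hi. apply (F_inj (f i) (Hf i Hi)). Qed.

Lemma wbound i : (i < N)%nat -> exists B, 0 <= B /\ forall m, (1 <= m)%nat -> sabs K (w i (f i m)) <= B.
Proof. intros Hi. destruct (Hw i Hi) as [[B HB] _]. exists (Rmax B 0). split. apply Rmax_r.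
  intros m Hm. eapply Rle_trans; [apply HB; auto|apply Rmax_l]. Qed.

Lemma T_lp i n x : (i < N)%nat -> in_lp K p x -> in_lp K p (T i n x).
Proof. intros Hi Hx. destruct (wbound i Hi) as [B [HB0 HB]].
  apply (Tn_bound K HK p Hp (f i) (w i) (Hf i Hi) B n x HB0 HB Hx). Qed.

Definition bcond (eps : R) (M : nat) (a : nat -> K) (n : nat) : Prop :=
  forall i l, (i < N)%nat -> (l < N)%nat -> i <> l ->
           (forall m m', (1 <= m <= M)%nat -> (M < m')%nat ->
              Nat.iter n (f l) m = Nat.iter n (f i) m' ->
              sabs K (sdiv K (Wprod K (f i) (w i) m' n)
                           (Wprod K (f l) (w l) m n)) < eps) /\
           (forall m m', (1 <= m <= M)%nat -> (1 <= m' <= M)%nat ->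
              Nat.iter n (f l) m = Nat.iter n (f i) m' ->
              sabs K (ssub K (sdiv K (Wprod K (f i) (w i) m' n)
                                 (Wprod K (f l) (w l) m n))
                           (sdiv K (a m') (a m))) < eps).

Definition LOC : Prop :=
  forall eps, 0 < eps -> forall (K0 M Rr : nat) (B : R) (a : nat -> K),
    (forall j, (1 <= j <= M)%nat -> a j <> s0 K) ->
    exists n, (K0 <= n)%nat /\
      (forall i, (i < N)%nat -> forall m, (1 <= m <= Rr)%nat -> B < sabs K (Wi i m n)) /\
      bcond eps M a n.

Definition Happrox : Prop :=
  forall z, in_lp K p z -> forall eta, 0 < eta -> forall K0 : nat,
    exists n, (K0 <= n)%nat /\ exists u,
      (forall i, (i < N)%nat -> forall m, (1 <= m)%nat -> sabs K (ssub K (T i n u m) (z m)) < eta) /\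
      (forall j, (n < j)%nat -> sabs K (u j) < eta).

Lemma LOC_wc : LOC -> weight_condition K N f w.
Proof.
  intros HL. destruct (dense_q K HK) as [q Hq].
  set (stage := fun k prev n =>
    (prev < n)%nat /\
    (forall i, (i < N)%nat -> forall m, (1 <= m <= k)%nat -> INR k < sabs K (Wi i m n)) /\
    ((forall j, (1 <= j <= fst (of_nat (fst (of_nat k))))%nat ->
        q (dec (snd (of_nat (fst (of_nat k)))) j) <> s0 K) ->
     bcond (/ (INR k + 1)) (fst (of_nat (fst (of_nat k))))
       (fun j => q (dec (snd (of_nat (fst (of_nat k)))) j)) n)).
  assert (Hex : forall k prev, exists n, stage k prev n).
  { intros k prev. assert (Hk : 0 < / (INR k + 1)).
    { apply Rinv_0_lt_compat. pose proof (pos_INR k); lra. }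
    destruct (classic (forall j, (1 <= j <= fst (of_nat (fst (of_nat k))))%nat ->
        q (dec (snd (of_nat (fst (of_nat k)))) j) <> s0 K)) as [Hnz|Hnz].
    - destruct (HL _ Hk (S prev) _ k (INR k) _ Hnz) as [n [H1 [H2 H3]]].
      exists n. split. lia. split; auto.
    - destruct (HL _ Hk (S prev) 0%nat k (INR k) (fun _ => s1 K)) as [n [H1 [H2 H3]]].
      intros; lia. exists n. split. lia. split; auto. intros; contradiction. }
  set (g := fun k prev => proj1_sig (constructive_indefinite_description _ (Hex k prev))).
  assert (Hg : forall k prev, stage k prev (g k prev)).
  { intros. unfold g. destruct (constructive_indefinite_description _ (Hex k prev)); auto. }
  assert (Hs : forall k, exists prev, stage k prev (recseq g k)).
  { intros k. destruct (recseq_eq g k) as [prev E]. rewrite E. eauto. }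
  exists (recseq g). split; [|split; [|split]].
  - simpl. destruct (Hg 0%nat 0%nat) as [H _]. lia.
  - intros k. simpl. destruct (Hg (S k) (recseq g k)) as [H _]. auto.
  - intros m i Hm Hi B. destruct (nat_above B) as [n0 Hn0].
    exists (Nat.max m n0). intros k Hk. destruct (Hs k) as [prev [_ [H _]]].
    eapply Rle_lt_trans; [|apply (H i Hi m); lia].
    eapply Rle_trans; eauto. apply le_INR; lia.
  - intros eps Heps K0 M a Ha.
    destruct (finite_min K HK a M Ha) as [cm [Am [Hcm [HAm Hb]]]].
    set (eta := Rmin (cm / 2) (eps * cm * cm / (16 * Am))).
    assert (Heta : 0 < eta). { unfold eta. apply Rmin_glb_lt. lra.
      apply Rdiv_lt_0_compat; [|lra]. apply Rmult_lt_0_compat; [apply Rmult_lt_0_compat|]; lra. }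
    destruct (fin_approx K HK q Hq a eta M 0 Heta) as [cc [_ Hcc]].
    set (qv := fun j => q (dec cc j)).
    assert (Hqr : forall m m', (1 <= m <= M)%nat -> (1 <= m' <= M)%nat ->
      sabs K (ssub K (sdiv K (qv m') (qv m)) (sdiv K (a m') (a m))) < eps / 2).
    { intros m m' Hm Hm'. destruct (Hcc m ltac:(lia)) as [A1 _]. destruct (Hcc m' ltac:(lia)) as [A2 _].
      destruct (Hb m Hm). destruct (Hb m' Hm').
      apply (ratio_close K HK _ _ _ _ eta cm Am); auto.
      unfold eta; pose proof (Rmin_l (cm / 2) (eps * cm * cm / (16 * Am))); lra.
      assert (eta <= eps * cm * cm / (16 * Am)) by apply Rmin_r.
      assert (4 * eta * Am <= eps * cm * cm / 4).
      { apply Rle_trans with (4 * (eps * cm * cm / (16 * Am)) * Am).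
        apply Rmult_le_compat_r; lra. right; field; lra. }
      assert (0 < eps * cm * cm) by (apply Rmult_lt_0_compat; [apply Rmult_lt_0_compat|]; lra).
      lra. }
    destruct (nat_above (2 / eps)) as [t0 Ht0].
    set (k := to_nat (to_nat (M, cc), Nat.max K0 t0)).
    assert (Hkt : (Nat.max K0 t0 <= k)%nat).
    { unfold k. pose proof (to_nat_non_decreasing (to_nat (M, cc)) (Nat.max K0 t0)). lia. }
    exists k. split. lia.
    destruct (Hs k) as [prev [_ [_ H]]].
    assert (E1 : fst (of_nat k) = to_nat (M, cc)) by (unfold k; rewrite cancel_of_to; auto).
    rewrite E1, cancel_of_to in H. simpl fst in H; simpl snd in H.
    assert (Hbk : bcond (/ (INR k + 1)) M qv (recseq g k)).
    { apply H. intros j Hj. apply Hcc. lia. }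
    assert (Hsm : / (INR k + 1) < eps / 2).
    { assert (INR t0 <= INR k) by (apply le_INR; lia).
      assert (2 / eps < INR k + 1) by lra.
      apply (Rmult_lt_reg_r (INR k + 1)). pose proof (pos_INR k); lra.
      rewrite Rinv_l by (pose proof (pos_INR k); lra).
      apply (Rmult_lt_reg_l (2 / eps)). apply Rdiv_lt_0_compat; lra.
      replace (2 / eps * (eps / 2 * (INR k + 1))) with (INR k + 1) by (field; lra). lra. }
    intros i l Hi Hl Hil. destruct (Hbk i l Hi Hl Hil) as [B1 B2]. split.
    + intros m m' Hm Hm' E. specialize (B1 m m' Hm Hm' E). lra.
    + intros m m' Hm Hm' E. specialize (B2 m m' Hm Hm' E).
      eapply Rle_lt_trans. apply (ssub_tri K HK _ (sdiv K (qv m') (qv m))).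
      specialize (Hqr m m' Hm Hm'). lra.
Qed.


Lemma smul_nz_l (W u : K) : smul K W u <> s0 K -> W <> s0 K.
Proof. intros H E. apply H. rewrite E. apply smul_0l; auto. Qed.
Lemma smul_nz_r (W u : K) : smul K W u <> s0 K -> u <> s0 K.
Proof. intros H E. apply H. rewrite E. apply smul_0r; auto. Qed.

Lemma near_nz (A al : K) eta : sabs K (ssub K A al) < eta -> 2 * eta <= sabs K al -> A <> s0 K.
Proof. intros H1 H2 E. rewrite E, ssub_0l in H1 by auto. assert (0 <= eta).
  { pose proof (sabs_ge0 K HK al). lra. } lra. Qed.

Lemma Happrox_LOC : Happrox -> LOC.
Proof.
  intros HA eps Heps K0 M Rr B a Ha.
  destruct (finite_min K HK a M Ha) as [cm [Am [Hcm [HAm Hb]]]].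
  destruct (nz_small K HK (eps * cm / 8)) as [del [Hdel1 Hdel2]].
  { apply Rdiv_lt_0_compat; [apply Rmult_lt_0_compat|]; lra. }
  assert (Hdp : 0 < sabs K del) by (apply sabs_pos; auto).
  set (c := Rmin cm (sabs K del)).
  assert (Hc : 0 < c) by (apply Rmin_glb_lt; lra).
  assert (Hc1 : c <= cm) by apply Rmin_l. assert (Hc2 : c <= sabs K del) by apply Rmin_r.
  set (eta := Rmin (Rmin (c / 2) (c / (2 * (Rabs B + 1)))) (Rmin (eps * cm / 8) (eps * cm * cm / (8 * Am)))).
  assert (HB1 : 0 < Rabs B + 1) by (pose proof (Rabs_pos B); lra).
  assert (E1 : eta <= c / 2) by (unfold eta; eapply Rle_trans; [apply Rmin_l|apply Rmin_l]).
  assert (E2 : eta <= c / (2 * (Rabs B + 1))) by (unfold eta; eapply Rle_trans; [apply Rmin_l|apply Rmin_r]).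
  assert (E3 : eta <= eps * cm / 8) by (unfold eta; eapply Rle_trans; [apply Rmin_r|apply Rmin_l]).
  assert (E4 : eta <= eps * cm * cm / (8 * Am)) by (unfold eta; eapply Rle_trans; [apply Rmin_r|apply Rmin_r]).
  assert (Heta : 0 < eta).
  { unfold eta. apply Rmin_glb_lt; apply Rmin_glb_lt; apply Rdiv_lt_0_compat; try lra;
    repeat apply Rmult_lt_0_compat; lra. }
  set (z := fun m => if (Nat.leb 1 m && Nat.leb m M)%bool then a m
                     else if (Nat.leb 1 m && Nat.leb m Rr)%bool then del else s0 K).
  assert (Hz : in_lp K p z).
  { apply (finite_lp K HK p z (Nat.max M Rr)). reflexivity.
    intros m Hm. unfold z. destruct (Nat.leb_spec 1 m); destruct (Nat.leb_spec m M);
      destruct (Nat.leb_spec m Rr); simpl; auto; lia. }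
  assert (Hz1 : forall m, (1 <= m <= M)%nat -> z m = a m).
  { intros m Hm. unfold z. destruct (Nat.leb_spec 1 m); destruct (Nat.leb_spec m M); simpl; auto; lia. }
  assert (Hz2 : forall m, (M < m)%nat -> sabs K (z m) <= sabs K del).
  { intros m Hm. unfold z. destruct (Nat.leb_spec 1 m); destruct (Nat.leb_spec m M);
      destruct (Nat.leb_spec m Rr); simpl; try lra; try lia. rewrite sabs_0 by auto. lra. }
  assert (Hz3 : forall m, (1 <= m <= Rr)%nat -> c <= sabs K (z m)).
  { intros m Hm. unfold z. destruct (Nat.leb_spec 1 m); destruct (Nat.leb_spec m M);
      destruct (Nat.leb_spec m Rr); simpl; try lia. destruct (Hb m); try lia; lra. lra. }
  destruct (HA z Hz eta Heta K0) as [n [HKn [u [Hu1 Hu2]]]].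
  exists n. split; auto. split.
  - intros i Hi m Hm. specialize (Hu1 i Hi m ltac:(lia)). rewrite T_formula in Hu1 by (auto; lia).
    apply (big_W K HK _ (u (Fi i n m)) (z m) c eta); auto.
    apply Hu2. pose proof (Fi_ge i n m Hi ltac:(lia)). lia.
    lra. assert (eta * (2 * (Rabs B + 1)) <= c / (2 * (Rabs B + 1)) * (2 * (Rabs B + 1)))
      by (apply Rmult_le_compat_r; lra).
    replace (c / (2 * (Rabs B + 1)) * (2 * (Rabs B + 1))) with c in H by (field; lra). lra.
  - intros i l Hi Hl Hil. split.
    + intros m m' Hm Hm' E.
      assert (A1 := Hu1 l Hl m ltac:(lia)). assert (A2 := Hu1 i Hi m' ltac:(lia)).
      rewrite T_formula in A1, A2 by (auto; lia). fold (Fi l n m) (Fi i n m') in E.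
      rewrite <- E in A2. rewrite Hz1 in A1 by auto.
      destruct (Hb m Hm) as [Hbm1 Hbm2].
      assert (NA := near_nz _ _ _ A1 ltac:(lra)).
      assert (NW := smul_nz_l _ _ NA). assert (Nu := smul_nz_r _ _ NA).
      unfold Wi in *. rewrite <- (sdiv_simpl K HK _ _ (u (Fi l n m))) by auto.
      apply (ratio_small K HK _ _ (a m) (z m') eta cm (sabs K del)); auto. lra.
      lra.
    + intros m m' Hm Hm' E.
      assert (A1 := Hu1 l Hl m ltac:(lia)). assert (A2 := Hu1 i Hi m' ltac:(lia)).
      rewrite T_formula in A1, A2 by (auto; lia). fold (Fi l n m) (Fi i n m') in E.
      rewrite <- E in A2. rewrite Hz1 in A1, A2 by auto.
      destruct (Hb m Hm) as [Hbm1 Hbm2]. destruct (Hb m' Hm') as [Hbm1' Hbm2'].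
      assert (NA := near_nz _ _ _ A1 ltac:(lra)).
      assert (NW := smul_nz_l _ _ NA). assert (Nu := smul_nz_r _ _ NA).
      unfold Wi in *. rewrite <- (sdiv_simpl K HK _ _ (u (Fi l n m))) by auto.
      apply (ratio_close K HK _ _ _ _ eta cm Am); auto. lra.
      assert (4 * eta * Am <= eps * cm * cm / 2).
      { apply Rle_trans with (4 * (eps * cm * cm / (8 * Am)) * Am).
        apply Rmult_le_compat_r; lra. right; field; lra. }
      assert (0 < eps * cm * cm) by (repeat apply Rmult_lt_0_compat; lra). lra.
Qed.

Lemma lp_ex (x : seqK K) : in_lp K p x -> ex_series (Pw K p x).
Proof. intros [_ H]; exact H. Qed.

Lemma sh_Happrox : s_hypercyclic K p N f w -> Happrox.
Proof.
  intros [x [Hx Hhyp]] z Hz eta Heta K0.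
  destruct (coord_tends0 K HK p Hp x (lp_ex _ Hx) (eta / 2)) as [J HJ]. lra.
  set (K1 := Nat.max K0 J).
  destruct (nz_small K HK (eta / 4)) as [th [Hth1 Hth2]]. lra.
  assert (Htp : 0 < sabs K th) by (apply sabs_pos; auto).
  assert (H0N : (0 < N)%nat) by lia.
  destruct (uniform_nat (fun n j => (n < K1)%nat -> sabs K (T 0 n x j) < sabs K th / 4) K1) as [J2 HJ2].
  { intros n Hn. destruct (coord_tends0 K HK p Hp (T 0 n x) (lp_ex _ (T_lp 0 n x H0N Hx)) (sabs K th / 4))
      as [Jn HJn]. lra. exists Jn. intros; auto. }
  destruct (coord_tends0 K HK p Hp z (lp_ex _ Hz) (sabs K th / 4)) as [J3 HJ3]. lra.
  set (R0 := Nat.max (Nat.max J2 J3) 1).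
  set (z' := fun m => if Nat.eqb m R0 then th else z m).
  assert (Hz' : in_lp K p z').
  { split. unfold z'. destruct (Nat.eqb_spec 0 R0). lia. apply Hz.
    apply (ex_series_eventually (Pw K p z) _ R0). intros n Hn. unfold Pw, z'.
    destruct (Nat.eqb_spec n R0); auto; lia. apply Hz. }
  set (eta' := Rmin (eta / 2) (sabs K th / 2)).
  assert (Heta' : 0 < eta') by (apply Rmin_glb_lt; lra).
  destruct (Hhyp z' Hz' eta' Heta') as [n [Hn1 Hn]].
  assert (Hc : forall i, (i < N)%nat -> forall m, sabs K (ssub K (T i n x m) (z' m)) < eta').
  { intros i Hi m. apply (lp_dist_coord K HK p Hp); auto. apply lp_ex, T_lp; auto. apply lp_ex; auto. apply Hn; auto. }
  assert (HnK : (K1 <= n)%nat).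
  { destruct (Nat.le_gt_cases K1 n) as [|Hlt]; auto. exfalso.
    assert (A1 := HJ2 n Hlt R0 ltac:(unfold R0; lia) Hlt).
    assert (A2 := Hc 0%nat H0N R0). unfold z' in A2. rewrite Nat.eqb_refl in A2.
    assert (A3 := ssub_rev_tri K HK th (T 0 n x R0)). rewrite ssub_sym in A3 by auto.
    assert (eta' <= sabs K th / 2) by apply Rmin_r. lra. }
  exists n. split. unfold K1 in HnK; lia. exists x. split.
  - intros i Hi m Hm. eapply Rle_lt_trans. apply (ssub_tri K HK _ (z' m)).
    assert (eta' <= eta / 2) by apply Rmin_l.
    specialize (Hc i Hi m). unfold z'. unfold z' in Hc. destruct (Nat.eqb_spec m R0).
    + assert (A := HJ3 m ltac:(unfold R0 in *; lia)).
      assert (A' := sabs_sub K HK th (z m)). lra.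
    + rewrite ssub_diag, sabs_0 by auto. lra.
  - intros j Hj. assert (sabs K (x j) < eta / 2) by (apply HJ; unfold K1 in HnK; lia). lra.
Qed.

Lemma SBCC_Happrox : SBCC K p N f w -> Happrox.
Proof.
  intros [nk [X0 [Sk [H0 [Hinc [HX0 [Hdense [HSk [Hcoll Hblow]]]]]]]]] z Hz eta Heta K0.
  destruct (Hdense z Hz (eta / 2)) as [x0 [HX Hd]]. lra.
  destruct (Hblow (eta / 2) ltac:(lra) K0 x0 HX) as [k [Hk [Hs HT]]].
  exists (nk k). split. pose proof (incr_ge nk Hinc k). lia.
  exists (Sk k x0). assert (Hu := HSk k x0 HX). split.
  - intros i Hi m Hm. eapply Rle_lt_trans. apply (ssub_tri K HK _ (x0 m)).
    assert (A1 : sabs K (ssub K (T i (nk k) (Sk k x0) m) (x0 m)) < eta / 2).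
    { apply (lp_dist_coord K HK p Hp). apply lp_ex, T_lp; auto. apply lp_ex; auto. lra. apply HT; auto. }
    assert (A2 : sabs K (ssub K (x0 m) (z m)) < eta / 2).
    { apply (lp_dist_coord K HK p Hp). apply lp_ex; auto. apply lp_ex; auto. lra. auto. }
    lra.
  - intros j Hj. assert (sabs K (Sk k x0 j) < eta / 2). apply (lp_norm_coord K HK p Hp); auto.
    apply lp_ex; auto. lra. lra.
Qed.

Definition shape (M : nat) (z : seqK K) : Prop :=
  z 0%nat = s0 K /\ (forall m, (1 <= m <= M)%nat -> z m <> s0 K) /\ (forall m, (M < m)%nat -> z m = s0 K).

Definition Lpairs (M : nat) := list_prod (seq 0 N) (seq 1 M).
Definition findpre (n M j : nat) := find (fun lm => Nat.eqb (Fi (fst lm) n (snd lm)) j) (Lpairs M).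
Definition Sblk (n M : nat) (z : seqK K) : seqK K := fun j =>
  match findpre n M j with Some lm => sdiv K (z (snd lm)) (Wi (fst lm) (snd lm) n) | None => s0 K end.

Lemma in_Lpairs M lm : In lm (Lpairs M) <-> (fst lm < N)%nat /\ (1 <= snd lm <= M)%nat.
Proof. destruct lm as [l m]. unfold Lpairs. rewrite in_prod_iff, !in_seq. simpl. lia. Qed.

Lemma findpre_some n M j lm : findpre n M j = Some lm ->
  (fst lm < N)%nat /\ (1 <= snd lm <= M)%nat /\ Fi (fst lm) n (snd lm) = j.
Proof. intros H. apply find_some in H. destruct H as [H1 H2]. apply in_Lpairs in H1.
  apply Nat.eqb_eq in H2. tauto. Qed.

Lemma findpre_none n M j : findpre n M j = None ->
  forall l m, (l < N)%nat -> (1 <= m <= M)%nat -> Fi l n m <> j.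
Proof. intros H l m Hl Hm E. assert (H' := find_none _ _ H (l, m)).
  rewrite in_Lpairs in H'. simpl in H'. specialize (H' ltac:(auto)). apply Nat.eqb_neq in H'. auto. Qed.

Lemma Sblk_low n M z j : (j <= n)%nat -> Sblk n M z j = s0 K.
Proof. intros Hj. unfold Sblk. destruct (findpre n M j) as [lm|] eqn:E; auto.
  apply findpre_some in E. destruct E as [H1 [H2 H3]].
  pose proof (Fi_ge (fst lm) n (snd lm) H1 ltac:(lia)). lia. Qed.

Lemma Sblk_high n M z : exists J, (n <= J)%nat /\ forall j, (J < j)%nat -> Sblk n M z j = s0 K.
Proof.
  set (J := fold_right (fun lm acc => Nat.max (Fi (fst lm) n (snd lm)) acc) n (Lpairs M)).
  assert (HJ : (n <= J)%nat /\ forall lm, In lm (Lpairs M) -> (Fi (fst lm) n (snd lm) <= J)%nat).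
  { unfold J. induction (Lpairs M) as [|x L IH]; simpl. split; [lia|intros _ []].
    destruct IH as [IH1 IH2]. split. lia. intros lm [<-|Hin]. lia. specialize (IH2 lm Hin). lia. }
  exists J. split. apply HJ. intros j Hj. unfold Sblk. destruct (findpre n M j) as [lm|] eqn:E; auto.
  assert (Hin : In lm (Lpairs M)) by (apply find_some in E; tauto).
  apply findpre_some in E. destruct E as [_ [_ E]]. assert (H := proj2 HJ lm Hin). lia. Qed.

Lemma Sblk_lp n M z : in_lp K p (Sblk n M z).
Proof. destruct (Sblk_high n M z) as [J [HJ1 HJ2]].
  apply (finite_lp K HK p _ J). apply Sblk_low; lia. auto. Qed.

Lemma length_Lpairs M : length (Lpairs M) = (N * M)%nat.
Proof. unfold Lpairs. rewrite length_prod, !length_seq. auto. Qed.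

Lemma Sblk_norm n M z Bb Zm : 0 < Bb -> 0 <= Zm ->
  (forall l m, (l < N)%nat -> (1 <= m <= M)%nat -> Bb <= sabs K (Wi l m n)) ->
  (forall m, sabs K (z m) <= Zm) ->
  Pn K p (Sblk n M z) <= INR (N * M) * rpow (Zm / Bb) p.
Proof. intros HB HZ HW Hz.
  set (G := fun lm : nat * nat => Fi (fst lm) n (snd lm)).
  set (c := fun _ : nat * nat => rpow (Zm / Bb) p).
  destruct (dsum_series (Lpairs M) G c) as [D1 D2]. intros; apply rpow_ge0.
  unfold Pn. eapply Rle_trans. apply (Series_le _ (dsum (Lpairs M) G c)); auto.
  - intros j. split. apply Pw_ge0. unfold Pw, Sblk. destruct (findpre n M j) as [lm|] eqn:E.
    + assert (Hin : In lm (Lpairs M)) by (apply find_some in E; tauto).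
      apply findpre_some in E. destruct E as [E1 [E2 E3]].
      eapply Rle_trans; [|apply (dsum_ge _ G c j lm); auto; intros; apply rpow_ge0].
      unfold c. apply rpow_le. lra. split. apply sabs_ge0; auto.
      rewrite sabs_div by auto. specialize (HW _ _ E1 E2). specialize (Hz (snd lm)).
      unfold Rdiv. apply Rmult_le_compat. apply sabs_ge0; auto.
      left; apply Rinv_0_lt_compat; lra. auto. apply Rinv_le_contravar; lra.
    + rewrite sabs_0, rpow_0 by auto. apply dsum_nonneg. intros; apply rpow_ge0.
  - rewrite D2. rewrite <- length_Lpairs. apply lsum_bound. intros; unfold c; lra.
Qed.

Lemma Sblk_err n M z eps Zm : (1 <= n)%nat -> shape M z -> 0 <= Zm ->
  (forall l m, (l < N)%nat -> (1 <= m <= M)%nat -> Wi l m n <> s0 K) ->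
  (forall m, sabs K (z m) <= Zm) -> bcond eps M z n ->
  forall i, (i < N)%nat ->
  ex_series (Pw K p (diff K (T i n (Sblk n M z)) z)) /\
  Pn K p (diff K (T i n (Sblk n M z)) z) <= INR (N * M) * rpow (eps * Zm) p.
Proof. intros Hn [Hz0 [Hz1 Hz2]] HZ HW Hz Hb i Hi.
  assert (Heps : 0 <= eps * Zm \/ True) by auto.
  set (c := fun _ : nat * nat => rpow (eps * Zm) p).
  destruct (dsum_series (Lpairs M) (fun lm => Fi (fst lm) n (snd lm)) c) as [D1 D2]. intros; apply rpow_ge0.
  destruct (reindex_series (Pw K p (diff K (T i n (Sblk n M z)) z))
    (dsum (Lpairs M) (fun lm => Fi (fst lm) n (snd lm)) c) (Fi i n)) as [R1 R2].
  - intros m Hm. apply (F_mono (f i) (Hf i Hi)); auto.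
  - intros; apply dsum_nonneg; intros; apply rpow_ge0.
  - auto.
  - apply Pw_zero_at; auto. unfold diff, T. rewrite Tn_0 by auto. rewrite Hz0. apply ssub_diag; auto.
  - intros m' Hm'. split. apply Pw_ge0.
    unfold Pw, diff. rewrite T_formula by auto. unfold Sblk.
    destruct (findpre n M (Fi i n m')) as [[l m]|] eqn:E.
    + assert (Hin : In (l, m) (Lpairs M)) by (apply find_some in E; tauto).
      apply findpre_some in E. simpl in E. destruct E as [E1 [E2 E3]].
      destruct (Nat.eq_dec l i).
      * subst l. assert (m = m') by (apply (Fi_inj i n); auto; lia). subst m'.
        unfold fst, snd. rewrite sdiv_mul_cancel; auto. rewrite ssub_diag, sabs_0, rpow_0 by auto.
        apply dsum_nonneg; intros; apply rpow_ge0.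
      * eapply Rle_trans; [|apply (dsum_ge _ _ c _ (l, m)); auto; intros; apply rpow_ge0].
        unfold c, fst, snd. apply rpow_le. lra. split. apply sabs_ge0; auto.
        destruct (Hb i l Hi E1 (not_eq_sym n0)) as [B1 B2].
        rewrite smul_sdiv_swap by auto.
        assert (Hzm : z m <> s0 K) by (apply Hz1; auto).
        destruct (Nat.le_gt_cases m' M) as [Hle|Hgt].
        -- specialize (B2 m m' E2 ltac:(lia) E3). rewrite ssub_factor by auto.
           rewrite sabs_mul by auto. unfold Wi in *. apply Rmult_le_compat; auto.
           apply sabs_ge0; auto. apply sabs_ge0; auto. lra.
        -- specialize (B1 m m' E2 Hgt E3). rewrite (Hz2 m' Hgt). rewrite ssub_0r by auto.
           rewrite sabs_mul by auto. unfold Wi in *. apply Rmult_le_compat; auto.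
           apply sabs_ge0; auto. apply sabs_ge0; auto. lra.
    + assert (Hgt : (M < m')%nat).
      { destruct (Nat.le_gt_cases m' M); auto. exfalso. apply (findpre_none _ _ _ E i m'); auto; lia. }
      rewrite Hz2 by auto. rewrite smul_0r, ssub_diag, sabs_0, rpow_0 by auto.
      apply dsum_nonneg; intros; apply rpow_ge0.
  - split; auto. unfold Pn. eapply Rle_trans; eauto. rewrite D2, <- length_Lpairs.
    apply lsum_bound. intros; unfold c; lra.
Qed.

Lemma NM_bound (NM x tgt : R) : 0 <= NM -> 0 <= x -> x < tgt / (NM + 1) -> NM * x < tgt.
Proof. intros H1 H2 H3. assert (x * (NM + 1) < tgt).
  { apply (Rmult_lt_compat_r (NM + 1)) in H3; [|lra]. unfold Rdiv in H3.
    rewrite Rmult_assoc, Rinv_l in H3 by lra. lra. } nra. Qed.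

Lemma BL (nk : nat -> nat) : (1 <= nk 0%nat)%nat -> (forall k, (nk k < nk (S k))%nat) ->
  (forall m i, (1 <= m)%nat -> (i < N)%nat -> forall B, exists K0, forall k, (K0 <= k)%nat ->
      B < sabs K (Wprod K (f i) (w i) m (nk k))) ->
  (forall eps, 0 < eps -> forall (K0 M : nat) (a : nat -> K),
       (forall j, (1 <= j <= M)%nat -> a j <> s0 K) ->
       exists k, (K0 <= k)%nat /\ bcond eps M a (nk k)) ->
  forall M z, shape M z -> forall tgt, 0 < tgt -> forall K0 : nat,
  exists k, (K0 <= k)%nat /\ Pn K p (Sblk (nk k) M z) < tgt /\
    forall i, (i < N)%nat -> ex_series (Pw K p (diff K (T i (nk k) (Sblk (nk k) M z)) z)) /\
      Pn K p (diff K (T i (nk k) (Sblk (nk k) M z)) z) < tgt.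
Proof.
  intros H0 Hinc Ha Hb M z Hz tgt Htgt K0.
  destruct Hz as [Hz0 [Hz1 Hz2]].
  destruct (finite_min K HK z M Hz1) as [cm [Am [Hcm [HAm Hbd]]]].
  assert (HzA : forall m, sabs K (z m) <= Am).
  { intros m. destruct (Nat.eq_dec m 0). subst. rewrite Hz0, sabs_0 by auto; lra.
    destruct (Nat.le_gt_cases m M). apply Hbd; lia. rewrite Hz2, sabs_0 by auto; lra. }
  set (NM := INR (N * M)). assert (HNM : 0 <= NM) by apply pos_INR.
  destruct (rpow_small p (tgt / (NM + 1))) as [d1 [Hd1 Hd1']]. lra. apply Rdiv_lt_0_compat; lra.
  set (Bb := Am / d1). assert (HBb : 0 < Bb) by (apply Rdiv_lt_0_compat; lra).
  destruct (uniform_nat (fun i k => forall m, (1 <= m <= M)%nat -> Bb < sabs K (Wi i m (nk k))) N) as [K1 HK1].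
  { intros i Hi.
    destruct (uniform_nat (fun m k => (1 <= m)%nat -> Bb < sabs K (Wi i m (nk k))) (S M)) as [K2 HK2].
    { intros m Hm. destruct m. exists 0%nat. intros; lia.
      destruct (Ha (S m) i ltac:(lia) Hi Bb) as [K3 HK3]. exists K3. intros; apply HK3; auto. }
    exists K2. intros k Hk m Hm. apply (HK2 m ltac:(lia) k Hk). lia. }
  set (eps' := d1 / Am). assert (He' : 0 < eps') by (apply Rdiv_lt_0_compat; lra).
  destruct (Hb eps' He' (Nat.max K0 K1) M z Hz1) as [k [Hk Hbk]].
  exists k. split. lia.
  assert (Hnk : (1 <= nk k)%nat) by (destruct k; auto; pose proof (incr_ge nk Hinc (S k)); lia).
  assert (HW : forall l m, (l < N)%nat -> (1 <= m <= M)%nat -> Bb <= sabs K (Wi l m (nk k))).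
  { intros l m Hl Hm. left. apply (HK1 l Hl k ltac:(lia) m Hm). }
  split.
  - eapply Rle_lt_trans. apply (Sblk_norm (nk k) M z Bb Am); auto; lra.
    unfold Bb. replace (Am / (Am / d1)) with d1 by (field; lra). apply NM_bound; auto. apply rpow_ge0.
  - intros i Hi. destruct (Sblk_err (nk k) M z eps' Am Hnk (conj Hz0 (conj Hz1 Hz2))) with (i := i)
      as [E1 E2]; auto. lra.
    intros l m Hl Hm E. specialize (HW l m Hl Hm). rewrite E, sabs_0 in HW by auto. lra.
    split; auto. eapply Rle_lt_trans; eauto. unfold eps'. replace (d1 / Am * Am) with d1 by (field; lra).
    apply NM_bound; auto. apply rpow_ge0.
Qed.

Definition zc (q : nat -> K) (M c : nat) : seqK K :=
  fun m => if (Nat.leb 1 m && Nat.leb m M)%bool then q (dec c m) else s0 K.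

Lemma zc_lp q M c : in_lp K p (zc q M c).
Proof. apply (finite_lp K HK p _ M). reflexivity. intros m Hm. unfold zc.
  destruct (Nat.leb_spec 1 m); destruct (Nat.leb_spec m M); simpl; auto; lia. Qed.

Lemma dense_zc (q : nat -> K) : (forall x e, 0 < e -> exists n, sabs K (ssub K (q n) x) < e) ->
  forall y, in_lp K p y -> forall d, 0 < d -> forall L : nat,
  exists M c, (L <= c)%nat /\ shape M (zc q M c) /\ ex_series (Pw K p (diff K (zc q M c) y)) /\
    Pn K p (diff K (zc q M c) y) < d.
Proof.
  intros Hq y [Hy0 Hy] d Hd L. change (ex_series (Pw K p y)) in Hy.
  assert (Hs := Series_correct _ Hy). apply is_series_Reals in Hs.
  destruct (Hs (d / 2)) as [M HM]. lra. specialize (HM M (le_n _)).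
  unfold Rdist in HM. apply Rabs_def2 in HM.
  assert (HNM : 0 <= INR (S M)) by apply pos_INR.
  destruct (rpow_small p (d / 2 / (INR (S M) + 1))) as [eta [Heta Heta']]. lra.
  apply Rdiv_lt_0_compat; lra.
  destruct (fin_approx K HK q Hq y eta M L Heta) as [c [Hc1 Hc2]].
  exists M, c. split; auto.
  assert (Hsh : shape M (zc q M c)).
  { unfold shape, zc. split. reflexivity. split.
    intros m Hm. destruct (Nat.leb_spec 1 m); destruct (Nat.leb_spec m M); simpl; try lia. apply Hc2; lia.
    intros m Hm. destruct (Nat.leb_spec 1 m); destruct (Nat.leb_spec m M); simpl; auto; lia. }
  split; auto.
  assert (Hex : ex_series (Pw K p (diff K (zc q M c) y))).
  { apply diff_series_lp; auto. apply zc_lp. }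
  split; auto. unfold Pn. rewrite (Series_incr_n _ (S M)) by (auto; lia). simpl pred.
  rewrite (Series_incr_n (Pw K p y) (S M)) in HM by (auto; lia). simpl pred in HM.
  rewrite (Series_ext (fun k => Pw K p (diff K (zc q M c) y) (S M + k)) (fun k => Pw K p y (S M + k))).
  2:{ intros k. unfold Pw, diff, zc. destruct (Nat.leb_spec 1 (S M + k)); destruct (Nat.leb_spec (S M + k) M);
      simpl; try lia; rewrite ssub_0l; auto. }
  assert (Hsum : sum_f_R0 (Pw K p (diff K (zc q M c) y)) M <= sum_f_R0 (fun _ => rpow eta p) M).
  { apply sum_f_R0_le. intros m Hm. unfold Pw, diff, zc. apply rpow_le. lra.
    split. apply sabs_ge0; auto.
    destruct (Nat.leb_spec 1 m); destruct (Nat.leb_spec m M); simpl; try lia.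
    left; apply Hc2; auto. assert (m = 0%nat) by lia. subst. rewrite Hy0, ssub_diag, sabs_0 by auto. lra. }
  rewrite sum_cte in Hsum.
  assert (rpow eta p * INR (S M) < d / 2).
  { rewrite Rmult_comm. apply NM_bound; auto. apply rpow_ge0. }
  assert (0 <= sum_f_R0 (Pw K p y) M) by (apply sum_f_R0_nonneg; intros; apply Pw_ge0).
  lra.
Qed.

Lemma lpnorm_zero_seq (x : seqK K) : (forall m, x m = s0 K) -> forall e, 0 < e -> lpnorm K p x < e.
Proof. intros H e He. assert (E : forall m, Pw K p x m = 0) by (intros; apply Pw_zero_at; auto).
  apply lpnorm_lt; auto. apply (ex_series_ext (fun _ => 0)). intros; auto. apply ex_series_zero.
  unfold Pn. rewrite (Series_ext _ _ E), Series_zero. apply rpow_gt0; auto. Qed.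

Lemma wc_SBCC : weight_condition K N f w -> SBCC K p N f w.
Proof.
  intros [nk [H0 [Hinc [Ha Hb]]]].
  destruct (dense_q K HK) as [q Hq].
  set (X0 := fun x => exists M, shape M x).
  set (Mof := fun x => epsilon (inhabits 0%nat) (fun M => shape M x)).
  assert (HMof : forall x, X0 x -> shape (Mof x) x).
  { intros x HX. unfold Mof. apply epsilon_spec. auto. }
  exists nk, X0, (fun k x => Sblk (nk k) (Mof x) x).
  split; auto. split; auto. split; [|split; [|split; [|split]]].
  - intros x [M [Hx0 [_ Hx2]]]. apply (finite_lp K HK p x M Hx0 Hx2).
  - intros y Hy e He. destruct (dense_zc q Hq y Hy (rpow e p) (rpow_gt0 _ _ He) 0) as [M [c [_ [Hsh [Hex Hlt]]]]].
    exists (zc q M c). split. exists M; auto. apply lpdist_lt; auto.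
  - intros k x _. apply Sblk_lp.
  - intros x [M [Hx0 [_ Hx2]]] i Hi e He. exists M. intros k Hk. apply lpnorm_zero_seq; auto.
    intros m. destruct m. apply Tn_0. destruct k; auto. pose proof (incr_ge nk Hinc (S k)); lia.
    fold (T i (nk k) x). rewrite T_formula by (auto; lia). rewrite Hx2. apply smul_0r; auto.
    pose proof (Fi_ge i (nk k) (S m) Hi ltac:(lia)). pose proof (incr_ge nk Hinc k). lia.
  - intros e He K0 x0 HX. assert (Hsh := HMof x0 HX).
    destruct (BL nk H0 Hinc Ha Hb (Mof x0) x0 Hsh (rpow e p) (rpow_gt0 _ _ He) K0) as [k [Hk [H1 H2]]].
    exists k. split; auto. split. apply lpnorm_lt; auto. apply Sblk_lp.
    intros i Hi. destruct (H2 i Hi) as [E1 E2]. apply lpdist_lt; auto.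
Qed.

Definition Jprev (Jr : nat -> nat) (r : nat) : nat := match r with O => 0%nat | S r' => Jr r' end.

Lemma Pw_if (b : bool) (u : K) : rpow (sabs K (if b then u else s0 K)) p = if b then rpow (sabs K u) p else 0.
Proof. destruct b; auto. rewrite sabs_0, rpow_0 by auto. auto. Qed.

Lemma glue (nr Jr : nat -> nat) (br : nat -> seqK K) (Cn : nat -> R) :
  (1 <= nr 0%nat)%nat -> (forall r, (nr r <= Jr r)%nat) -> (forall r, (Jr r < nr (S r))%nat) ->
  (forall r, in_lp K p (br r)) -> (forall r j, (j <= nr r)%nat -> br r j = s0 K) ->
  (forall r j, (Jr r < j)%nat -> br r j = s0 K) ->
  (forall r, Pn K p (br r) * Cn (Jprev Jr r) <= (/4) ^ r) ->
  (forall n, 1 <= Cn n) -> (forall a b, (a <= b)%nat -> Cn a <= Cn b) ->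
  (forall i n x, (i < N)%nat -> in_lp K p x -> Pn K p (T i n x) <= Cn n * Pn K p x) ->
  let x := fun j => ksum K (fun t => br t j) j in
  in_lp K p x /\ forall r i z, (i < N)%nat ->
    ex_series (Pw K p (diff K (T i (nr r) (br r)) z)) ->
    ex_series (Pw K p (diff K (T i (nr r) x) z)) /\
    Pn K p (diff K (T i (nr r) x) z) <= rpow 2 p * ((/4) ^ r / 3 + Pn K p (diff K (T i (nr r) (br r)) z)).
Proof.
  intros G0 G1 G2 G3 G4 G5 G6 C1 C2 C3 x.
  assert (Hpp : 0 < p) by lra.
  assert (Jmono : forall s r, (s <= r)%nat -> (Jr s <= Jr r)%nat).
  { intros s r H. induction H. lia. specialize (G2 m). specialize (G1 (S m)). lia. }
  assert (mono : forall s r, (s < r)%nat -> (Jr s < nr r)%nat).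
  { intros s r H. destruct r. lia. specialize (Jmono s r ltac:(lia)). specialize (G2 r). lia. }
  assert (Jpv : forall s r, (s < r)%nat -> (Jr s <= Jprev Jr r)%nat).
  { intros s r H. destruct r. lia. simpl. apply Jmono; lia. }
  assert (nrge : forall r, (S r <= nr r)%nat).
  { induction r. auto. specialize (G2 r). specialize (G1 r). lia. }
  assert (supp : forall t j, br t j <> s0 K -> (nr t < j <= Jr t)%nat).
  { intros t j H. destruct (Nat.le_gt_cases j (nr t)). exfalso; apply H, G4; auto.
    destruct (Nat.le_gt_cases j (Jr t)). lia. exfalso; apply H, G5; auto. }
  assert (disj : forall t t' j, br t j <> s0 K -> br t' j <> s0 K -> t = t').
  { intros t t' j H1 H2. apply supp in H1. apply supp in H2.
    destruct (Nat.lt_total t t') as [H|[H|H]]; auto.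
    specialize (mono t t' H). lia. specialize (mono t' t H). lia. }
  assert (Pnb : forall t, Pn K p (br t) <= (/4) ^ t).
  { intros t. specialize (G6 t). specialize (C1 (Jprev Jr t)).
    assert (0 <= Pn K p (br t)) by (apply Pn_ge0; auto; apply G3). nra. }
  assert (exb : forall t, ex_series (Pw K p (br t))) by (intros; apply G3).
  assert (Hx : in_lp K p x).
  { split. unfold x. simpl. apply G4. lia.
    apply (nonneg_bounded_series _ (4/3)). intros; apply Pw_ge0.
    intros Jm. eapply Rle_trans.
    apply (sum_f_R0_le _ (fun j => sum_f_R0 (fun t => Pw K p (br t) j) j)).
    { intros j _. unfold x. apply ksum_Pw; auto. intros t t' _ _ H1 H2. eapply disj; eauto. }
    eapply Rle_trans. apply double_bound. intros; apply Pw_ge0.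
    eapply Rle_trans; [|apply (geom_all Jm)]. apply sum_f_R0_le. intros t _.
    eapply Rle_trans; [|apply Pnb]. apply partial_le_series; auto. intros; apply Pw_ge0. }
  split; auto.
  intros r i z Hi Hez.
  set (n := nr r).
  set (tl := fun j => ksum K (fun t => if Nat.ltb r t then br t j else s0 K) j).
  assert (Htl : in_lp K p tl /\ Pn K p tl <= (/4) ^ r / 3 / Cn n).
  { assert (HCn : 0 < Cn n) by (specialize (C1 n); lra).
    assert (B : forall Jm, sum_f_R0 (Pw K p tl) Jm <= (/4) ^ r / 3 / Cn n).
    { intros Jm. eapply Rle_trans.
      apply (sum_f_R0_le _ (fun j => sum_f_R0 (fun t => if Nat.ltb r t then Pw K p (br t) j else 0) j)).
      { intros j _. unfold tl, Pw. eapply Rle_trans. apply ksum_Pw; auto.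
        intros t t' _ _ H1 H2. destruct (Nat.ltb r t); destruct (Nat.ltb r t'); try tauto.
        eapply disj; eauto. right. apply sum_eq. intros; apply Pw_if. }
      eapply Rle_trans. apply double_bound. intros; destruct (Nat.ltb r t); [apply Pw_ge0|lra].
      apply Rle_trans with (sum_f_R0 (fun t => (if Nat.ltb r t then (/4) ^ t else 0) * / Cn n) Jm).
      { apply sum_f_R0_le. intros t _. destruct (Nat.ltb_spec r t).
        - eapply Rle_trans. apply (partial_le_series (Pw K p (br t)) Jm); auto. intros; apply Pw_ge0.
          specialize (G6 t). assert (Cn n <= Cn (Jprev Jr t)).
          { apply C2. unfold n. specialize (Jpv r t H). specialize (G1 r). lia. }
          assert (0 <= Pn K p (br t)) by (apply Pn_ge0; auto).
          apply (Rmult_le_reg_r (Cn n)); auto. rewrite Rmult_assoc, Rinv_l by lra.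
          fold (Pn K p (br t)). nra.
        - rewrite Rmult_0_l, sum_eq_R0. lra. intros; lra. }
      rewrite <- scal_sum. rewrite Rmult_comm. unfold Rdiv at 2.
      apply Rmult_le_compat_r. left; apply Rinv_0_lt_compat; auto. apply geom_tail. }
    assert (Htl0 : tl 0%nat = s0 K) by (unfold tl; simpl; destruct (Nat.ltb_spec r 0); auto; lia).
    destruct (nonneg_bounded_series (Pw K p tl) _ (Pw_ge0 K p tl) B) as [E1 E2].
    split. split; auto. auto. }
  destruct Htl as [Htl1 Htl2].
  assert (Hn1 : (1 <= n)%nat) by (unfold n; specialize (nrge r); lia).
  assert (Eq : forall m, Pw K p (diff K (T i n x) (T i n (br r))) m = Pw K p (T i n tl) m).
  { intros m. unfold Pw, diff. destruct m.
    - unfold T. rewrite !Tn_0 by auto. rewrite ssub_diag; auto.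
    - rewrite !T_formula by (auto; lia).
      set (j := Fi i n (S m)). assert (Hj : (n < j)%nat) by (unfold j; pose proof (Fi_ge i n (S m) Hi ltac:(lia)); lia).
      assert (Ex : x j = sadd K (br r j) (tl j)).
      { unfold x, tl. apply (ksum_split K HK (fun t => br t j) j r). unfold n in Hj; specialize (nrge r); lia.
        intros t Ht. apply G5. specialize (mono t r Ht). unfold n in Hj. lia. }
      rewrite Ex, smul_add_distr, ssub_sadd_l by auto. reflexivity. }
  assert (HTtl : Pn K p (T i n tl) <= (/4) ^ r / 3).
  { eapply Rle_trans. apply C3; auto. assert (HCn : 0 < Cn n) by (specialize (C1 n); lra).
    apply Rle_trans with (Cn n * ((/4) ^ r / 3 / Cn n)). apply Rmult_le_compat_l; lra.
    right; field; lra. }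
  assert (Hd1 : ex_series (Pw K p (diff K (T i n x) (T i n (br r))))).
  { apply diff_series_lp; auto. apply T_lp; auto. apply T_lp; auto. }
  destruct (diff_series K HK p Hp (T i n x) (T i n (br r)) z Hd1 Hez) as [D1 D2].
  split; auto. eapply Rle_trans; eauto. apply Rmult_le_compat_l. apply rpow_ge0.
  unfold Pn at 1. rewrite (Series_ext _ _ Eq). fold (Pn K p (T i n tl)). lra.
Qed.

Lemma wc_sh : weight_condition K N f w -> s_hypercyclic K p N f w.
Proof.
  intros [nk [H0 [Hinc [Ha Hb]]]].
  assert (Hpp : 0 < p) by lra.
  destruct (dense_q K HK) as [q Hq].
  destruct (uniform_R (fun i B => forall m, (1 <= m)%nat -> sabs K (w i (f i m)) <= B) N) as [B0 HB0].
  { intros i Hi. destruct (wbound i Hi) as [B [HB HB']]. exists B. intros B' HB'' m Hm.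
    eapply Rle_trans; eauto. }
  set (beta := Rmax B0 1).
  assert (Hbeta : 1 <= beta) by apply Rmax_r.
  assert (HB : forall i, (i < N)%nat -> forall m, (1 <= m)%nat -> sabs K (w i (f i m)) <= beta).
  { intros i Hi. apply HB0; auto. apply Rmax_l. }
  set (Cn := fun n => rpow (beta ^ n) p).
  assert (C1 : forall n, 1 <= Cn n).
  { intros n. unfold Cn. rewrite <- (rpow_1 p). apply rpow_le; auto. split. lra. apply pow_R1_Rle; auto. }
  assert (C2 : forall a b, (a <= b)%nat -> Cn a <= Cn b).
  { intros a b Hab. unfold Cn. apply rpow_le; auto. split. pose proof (pow_R1_Rle beta a Hbeta); lra.
    apply Rle_pow; auto. }
  assert (C3 : forall i n x, (i < N)%nat -> in_lp K p x -> Pn K p (T i n x) <= Cn n * Pn K p x).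
  { intros i n x Hi Hx. apply (Tn_bound K HK p Hp (f i) (w i) (Hf i Hi) beta n x ltac:(lra) (HB i Hi) Hx). }
  set (Mr := fun r => fst (of_nat (fst (of_nat r)))).
  set (cr := fun r => snd (of_nat (fst (of_nat r)))).
  set (zr := fun r => zc q (Mr r) (cr r)).
  set (SpecP := fun r J (t : nat * nat * seqK K) =>
    (J < fst (fst t))%nat /\ (fst (fst t) <= snd (fst t))%nat /\ in_lp K p (snd t) /\
    (forall j, (j <= fst (fst t))%nat -> snd t j = s0 K) /\
    (forall j, (snd (fst t) < j)%nat -> snd t j = s0 K) /\
    Pn K p (snd t) * Cn J <= (/4) ^ r /\
    (shape (Mr r) (zr r) -> forall i, (i < N)%nat ->
       ex_series (Pw K p (diff K (T i (fst (fst t)) (snd t)) (zr r))) /\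
       Pn K p (diff K (T i (fst (fst t)) (snd t)) (zr r)) <= (/4) ^ r)).
  assert (Hex : forall r J, exists t, SpecP r J t).
  { intros r J. assert (H4 : 0 < (/4) ^ r) by (apply pow_lt; lra).
    assert (HCJ := C1 J).
    destruct (classic (shape (Mr r) (zr r))) as [Hsh|Hsh].
    - destruct (BL nk H0 Hinc Ha Hb (Mr r) (zr r) Hsh ((/4) ^ r / Cn J)
        ltac:(apply Rdiv_lt_0_compat; lra) (S J)) as [k [Hk [Hn Herr]]].
      destruct (Sblk_high (nk k) (Mr r) (zr r)) as [J2 [HJ2 HJ2']].
      exists (nk k, J2, Sblk (nk k) (Mr r) (zr r)). unfold SpecP; simpl.
      split. pose proof (incr_ge nk Hinc k). lia. split; auto. split. apply Sblk_lp.
      split. intros; apply Sblk_low; auto. split; auto. split.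
      apply (Rmult_lt_compat_r (Cn J)) in Hn; [|lra]. unfold Rdiv in Hn.
      rewrite Rmult_assoc, Rinv_l, Rmult_1_r in Hn by lra. lra.
      intros _ i Hi. destruct (Herr i Hi) as [E1 E2]. split; auto.
      assert ((/4) ^ r / Cn J <= (/4) ^ r).
      { unfold Rdiv. rewrite <- (Rmult_1_r ((/4)^r)) at 2. apply Rmult_le_compat_l. lra.
        rewrite <- Rinv_1. apply Rinv_le_contravar; lra. }
      lra.
    - exists (S J, S J, zeroK K). unfold SpecP; simpl.
      destruct (finite_lp K HK p (zeroK K) 0 eq_refl (fun _ _ => eq_refl)) as [Z1 Z2].
      split. lia. split. lia. split; auto. split. intros; reflexivity. split. intros; reflexivity.
      split. rewrite Z2. simpl. unfold Pw, zeroK. rewrite sabs_0, rpow_0 by auto. lra.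
      intros; contradiction. }
  set (nxt := fun r J => proj1_sig (constructive_indefinite_description _ (Hex r J))).
  assert (Hnxt : forall r J, SpecP r J (nxt r J)).
  { intros. unfold nxt. destruct (constructive_indefinite_description _ (Hex r J)); auto. }
  set (st := recst nxt (fun t => snd (fst t))).
  set (nr := fun r => fst (fst (st r))). set (Jr := fun r => snd (fst (st r))). set (br := fun r => snd (st r)).
  assert (HS : forall r, SpecP r (Jprev Jr r) (st r)).
  { intros [|r]. apply Hnxt. apply Hnxt. }
  assert (HG := glue nr Jr br Cn).
  destruct HG as [Hx Happ].
  - destruct (HS 0%nat) as [A _]. unfold nr. simpl in A. lia.
  - intros r. apply (HS r).
  - intros r. destruct (HS (S r)) as [A _]. apply A.
  - intros r. apply (HS r).
  - intros r. apply (HS r).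
  - intros r. apply (HS r).
  - intros r. apply (HS r).
  - auto.
  - auto.
  - auto.
  - set (x := fun j => ksum K (fun t => br t j) j) in *.
    exists x. split; auto. intros y Hy e He.
    set (A := rpow 2 p). assert (HA : 1 <= A) by (unfold A; rewrite <- (rpow_1 p); apply rpow_le; lra).
    set (E := rpow e p). assert (HE : 0 < E) by (apply rpow_gt0; auto).
    destruct (dense_zc q Hq y Hy (E / (4 * A)) ltac:(apply Rdiv_lt_0_compat; lra) 0)
      as [M [c [_ [Hsh [Hex1 Hlt1]]]]].
    destruct (pow_lt_1_zero (/4) ltac:(rewrite Rabs_pos_eq; lra) (E / (8 * A * A))) as [t0 Ht0].
    { apply Rdiv_lt_0_compat; [lra|]. nra. }
    set (r := to_nat (to_nat (M, c), t0)).
    assert (Hr : (t0 <= r)%nat) by (unfold r; pose proof (to_nat_non_decreasing (to_nat (M, c)) t0); lia).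
    assert (Hzr : zr r = zc q M c).
    { unfold zr, Mr, cr, r. rewrite cancel_of_to. cbn [fst]. rewrite cancel_of_to. reflexivity. }
    specialize (Ht0 r Hr). rewrite Rabs_pos_eq in Ht0 by (apply pow_le; lra).
    destruct (HS r) as [S1 [_ [_ [_ [_ [_ S7]]]]]].
    assert (HMr : Mr r = M) by (unfold Mr, r; rewrite cancel_of_to; cbn [fst]; rewrite cancel_of_to; reflexivity).
    rewrite Hzr, HMr in S7. specialize (S7 Hsh).
    exists (nr r). split. unfold nr. lia.
    intros i Hi. destruct (S7 i Hi) as [E1 E2].
    change (fst (fst (st r))) with (nr r) in E1, E2. change (snd (st r)) with (br r) in E1, E2.
    destruct (Happ r i (zc q M c) Hi E1) as [F1 F2].
    destruct (diff_series K HK p Hp (T i (nr r) x) (zc q M c) y F1 Hex1) as [D1 D2].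
    apply lpdist_lt; auto. fold E. fold A in F2, D2.
    assert (0 <= (/4) ^ r) by (apply pow_le; lra).
    assert (P1 : Pn K p (diff K (T i (nr r) x) (zc q M c)) <= A * (2 * (/4) ^ r)).
    { eapply Rle_trans. apply F2. apply Rmult_le_compat_l; lra. }
    assert (P2 : A * (2 * (/4) ^ r) < E / (4 * A)).
    { assert (A * (2 * (/4)^r) < A * (2 * (E / (8 * A * A)))) by (apply Rmult_lt_compat_l; lra).
      replace (A * (2 * (E / (8 * A * A)))) with (E / (4 * A)) in H1 by (field; lra). auto. }
    assert (P3 : A * (E / (4 * A) + E / (4 * A)) = E / 2) by (field; lra).
    assert (A * (Pn K p (diff K (T i (nr r) x) (zc q M c)) + Pn K p (diff K (zc q M c) y)) <
            A * (E / (4 * A) + E / (4 * A))) by (apply Rmult_lt_compat_l; lra).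
    unfold T in *. lra.
Qed.

Lemma main_equiv : (s_hypercyclic K p N f w <-> SBCC K p N f w) /\
  (SBCC K p N f w <-> weight_condition K N f w).
Proof.
  assert (A : s_hypercyclic K p N f w -> weight_condition K N f w).
  { intros H. apply LOC_wc, Happrox_LOC, sh_Happrox, H. }
  assert (B : SBCC K p N f w -> weight_condition K N f w).
  { intros H. apply LOC_wc, Happrox_LOC, SBCC_Happrox, H. }
  split; split; intros H.
  - apply wc_SBCC, A, H.
  - apply wc_sh, B, H.
  - apply B, H.
  - apply wc_SBCC, H.
Qed.

End Main.

Theorem theorem3p3 (K : scalars) (HK : K = RScal \/ K = CScal)
  (p : R) (Hp : 1 <= p) (N : nat) (HN : (2 <= N)%nat)
  (f : nat -> nat -> nat) (w : nat -> nat -> K)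
  (Hf : forall i, (i < N)%nat -> admissible_map (f i))
  (Hw : forall i, (i < N)%nat -> admissible_weight K (f i) (w i)) :
  (s_hypercyclic K p N f w <-> SBCC K p N f w) /\
  (SBCC K p N f w <-> weight_condition K N f w).
Proof. exact (main_equiv K HK p Hp N HN f w Hf Hw). Qed.
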